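(* For $A=\mathbb{F}_8$ with calculus as in the context, the Laplacians $\Delta$ (all satisfying $\Delta1=0$) arising from the QLCs of the metrics $\beta g_0$ are as follows. For $\beta=y^2$: the 12 QLCs give exactly three distinct Laplacians, each arising from exactly four QLCs: $(\Delta y,\Delta y^2)=(0,\,y^2)$, $(0,\,1+y+y^2)$, $(y^2,\,1)$. For $\beta=1+y^2$: exactly three, each from four QLCs: $(\Delta y,\Delta y^2)=(y,\,0)$, $(1+y+y^2,\,0)$, $(y+y^2,\,1+y+y^2)$. For $\beta=1+y$: exactly three, each from four QLCs: $(\Delta y,\Delta y^2)=(y^2,\,y^2)$, $(y,\,y)$, $(1,\,1+y)$. For $\beta=y$: $\Delta=0$ for all four QLCs. In particular, exactly six of these Laplacians have a nonzero solution $v$ of $\Delta v=v$, namely $v=y^2$, $1+y+y^2$ (for $\beta=y^2$), $v=y$, $1+y+y^2$ (for $\beta=1+y^2$), $v=y^2$, $y$ (for $\beta=1+y$), in the order listed above.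
   Context: Algebra F: $A=\mathbb{F}_2[y]/(y^3+y^2+1)\cong\mathbb{F}_8$ with $x=y^2$. $\Omega^1$ is free as a left module on $\omega^1=\mathrm{d}x$, $\omega^2=\mathrm{d}y$, with $\omega^1x=(1+x)\omega^1+\omega^2$, $\omega^1y=\omega^1+x\omega^2$, $\omega^2x=(1+y)\omega^1$, $\omega^2y=\omega^1+y\omega^2$. $\Omega^2=A\,\mathrm{Vol}$ free, $\mathrm{Vol}$ central, $\omega^1\wedge\omega^1=y\,\mathrm{Vol}$, $\omega^1\wedge\omega^2=\omega^2\wedge\omega^1=\mathrm{Vol}$, $\omega^2\wedge\omega^2=(1+y)\mathrm{Vol}$, $\mathrm{d}\omega^i=0$. $g_0=y^2\,\omega^1\otimes\omega^1+\omega^1\otimes\omega^2+\omega^2\otimes\omega^1+(1+y)\,\omega^2\otimes\omega^2$ and $\beta g_0$ ($0\ne\beta\in A$) are the invertible central quantum symmetric metrics, with inverse bimodule map $(\ ,\ ):\Omega^1\otimes_A\Omega^1\to A$ satisfying $((\eta,\ )\otimes\mathrm{id})g=\eta=(\mathrm{id}\otimes(\ ,\eta))g$. A QLC for $g$ is a bimodule connection ($\nabla(a\omega)=a\nabla\omega+\mathrm{d}a\otimes\omega$, $\nabla(\omega a)=(\nabla\omega)a+\sigma(\omega\otimes\mathrm{d}a)$, $\sigma$ a bimodule map) that is torsion free ($\wedge\nabla=\mathrm{d}$) and metric compatible ($(\nabla\otimes\mathrm{id})g+(\sigma\otimes\mathrm{id})(\mathrm{id}\otimes\nabla)g=0$).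 The Laplacian is $\Delta=(\ ,\ )\nabla\mathrm{d}:A\to A$. *)

(* Defs.v *)
(* Algebra F of the paper: A = F_2[y]/(y^3+y^2+1) = F_8 with
   its 2-dimensional differential calculus, quantum metrics beta*g0, QLCs and
   Laplacians.  Everything is modelled concretely on finite types, using the
   left bases given in the paper. *)
From HB Require Import structures.
From mathcomp Require Import all_boot all_order all_algebra.
Set Implicit Arguments. Unset Strict Implicit. Unset Printing Implicit Defensive.

(* (a0, a1, a2) : A  represents  a0 + a1 y + a2 y^2  with a_i in F_2 = bool. *)
Notation A := (bool * bool * bool)%type.

Definition mkA (b0 b1 b2 : bool) : A := (b0, b1, b2).
Definition zeroA : A := mkA false false false.
Definition oneA  : A := mkA true false false.
Definition yA    : A := mkA false true false.
Definition xA    : A := mkA false false true.   (* x = y^2 *)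

Definition addF8 (a b : A) : A :=
  mkA (xorb a.1.1 b.1.1) (xorb a.1.2 b.1.2) (xorb a.2 b.2).
(* multiplication by y, using the relation y^3 = y^2 + 1 *)
Definition muly (b : A) : A := mkA b.2 b.1.1 (xorb b.1.2 b.2).
Definition scalA (c : bool) (b : A) : A := if c then b else zeroA.
Definition mulF8 (a b : A) : A :=
  addF8 (scalA a.1.1 b) (addF8 (scalA a.1.2 (muly b)) (scalA a.2 (muly (muly b)))).

(* ---------- Omega^1 : free left module on omega^1 = dx (index 0), omega^2 = dy (index 1) *)
Notation Om1 := {ffun 'I_2 -> A}.
Definition mk1 (c1 c2 : A) : Om1 := [ffun i : 'I_2 => if val i == 0 then c1 else c2].
Definition om (i : 'I_2) : Om1 := [ffun j => if j == i then oneA else zeroA].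
Definition zero1 : Om1 := [ffun _ => zeroA].
Definition add1 (w v : Om1) : Om1 := [ffun i => addF8 (w i) (v i)].
Definition lmul1 (a : A) (w : Om1) : Om1 := [ffun i => mulF8 a (w i)].

(* bimodule relations: omega^i y and omega^i x *)
Definition om_y (i : 'I_2) : Om1 :=
  if val i == 0 then mk1 oneA xA
  else mk1 oneA yA.
Definition om_x (i : 'I_2) : Om1 :=
  if val i == 0 then mk1 (addF8 oneA xA) oneA
  else mk1 (addF8 oneA yA) zeroA.
Definition om_r (i : 'I_2) (a : A) : Om1 :=
  add1 (if a.1.1 then om i else zero1)
       (add1 (if a.1.2 then om_y i else zero1) (if a.2 then om_x i else zero1)).
Definition rmul1 (w : Om1) (a : A) : Om1 :=
  \big[add1/zero1]_(i < 2) lmul1 (w i) (om_r i a).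

Definition d (a : A) : Om1 := mk1 (scalA a.2 oneA) (scalA a.1.2 oneA).

(* ---------- Omega^1 (x)_A Omega^1 : free left module on omega^k (x) omega^j *)
Notation Om2 := {ffun 'I_2 * 'I_2 -> A}.
Definition zero2 : Om2 := [ffun _ => zeroA].
Definition add2 (T U : Om2) : Om2 := [ffun kj => addF8 (T kj) (U kj)].
Definition lmul2 (a : A) (T : Om2) : Om2 := [ffun kj => mulF8 a (T kj)].
(* w (x) v  =  sum_j (w . v_j) (x) omega^j *)
Definition tens (w v : Om1) : Om2 := [ffun kj => rmul1 w (v kj.2) kj.1].
Definition om2 (k j : 'I_2) : Om2 := tens (om k) (om j).
Definition rmul2 (T : Om2) (a : A) : Om2 :=
  \big[add2/zero2]_(kj : 'I_2 * 'I_2) tens (lmul1 (T kj) (om kj.1)) (rmul1 (om kj.2) a).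

(* ---------- Omega^2 = A Vol, wedge product (Vol-coefficient) *)
Definition wedge_basis (kj : 'I_2 * 'I_2) : A :=
  match val kj.1, val kj.2 with
  | 0, 0 => yA
  | 1, 1 => addF8 oneA yA
  | _, _ => oneA
  end.
Definition wedge (T : Om2) : A :=
  \big[addF8/zeroA]_(kj : 'I_2 * 'I_2) mulF8 (T kj) (wedge_basis kj).
(* d on Omega^1:  d(a omega^i) = da ^ omega^i  (since d omega^i = 0) *)
Definition d1 (w : Om1) : A :=
  \big[addF8/zeroA]_(i < 2) wedge (tens (d (w i)) (om i)).

Notation Om3 := {ffun 'I_2 * 'I_2 * 'I_2 -> A}.
Definition zero3 : Om3 := [ffun _ => zeroA].
Definition add3 (X Y : Om3) : Om3 := [ffun i => addF8 (X i) (Y i)].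
Definition tens12 (w : Om1) (U : Om2) : Om3 :=
  [ffun mbc => rmul1 w (U (mbc.1.2, mbc.2)) mbc.1.1].
Definition tens21 (T : Om2) (v : Om1) : Om3 :=
  \big[add3/zero3]_(ab : 'I_2 * 'I_2)
     tens12 (lmul1 (T ab) (om ab.1)) (tens (om ab.2) v).
(* (s (x) id) X  for a left-linear s *)
Definition sigma_id (s : Om2 -> Om2) (X : Om3) : Om3 :=
  \big[add3/zero3]_(mab : 'I_2 * 'I_2 * 'I_2)
     tens21 (s (lmul2 (X mab) (om2 mab.1.1 mab.1.2))) (om mab.2).

Definition g0 : Om2 := [ffun kj : 'I_2 * 'I_2 =>
  match val kj.1, val kj.2 with
  | 0, 0 => xA
  | 1, 1 => addF8 oneA yA
  | _, _ => oneA
  end].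
Definition gmetric (beta : A) : Om2 := lmul2 beta g0.

Definition bimod_map2 (s : {ffun Om2 -> Om2}) : bool :=
  [&& [forall T : Om2, forall U : Om2, s (add2 T U) == add2 (s T) (s U)],
      [forall a : A, forall T : Om2, s (lmul2 a T) == lmul2 a (s T)] &
      [forall a : A, forall T : Om2, s (rmul2 T a) == rmul2 (s T) a]].

Definition is_inv_metric (g : Om2) (ip : {ffun Om2 -> A}) : bool :=
  [&& [forall T : Om2, forall U : Om2, ip (add2 T U) == addF8 (ip T) (ip U)],
      [forall a : A, forall T : Om2, ip (lmul2 a T) == mulF8 a (ip T)],
      [forall a : A, forall T : Om2, ip (rmul2 T a) == mulF8 (ip T) a],
      (* ((eta, ) (x) id) g = eta ,   g = sum_kj (g_kj omega^k) (x) omega^j *)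
      [forall eta : Om1,
         \big[add1/zero1]_(kj : 'I_2 * 'I_2)
            lmul1 (ip (tens eta (lmul1 (g kj) (om kj.1)))) (om kj.2) == eta] &
      [forall eta : Om1,
         \big[add1/zero1]_(kj : 'I_2 * 'I_2)
            rmul1 (lmul1 (g kj) (om kj.1)) (ip (tens (om kj.2) eta)) == eta]].

Definition is_QLC (g : Om2) (nabla : {ffun Om1 -> Om2}) (sigma : {ffun Om2 -> Om2}) : bool :=
  [&&
      [forall w : Om1, forall v : Om1, nabla (add1 w v) == add2 (nabla w) (nabla v)],
      [forall a : A, forall w : Om1,
         nabla (lmul1 a w) == add2 (lmul2 a (nabla w)) (tens (d a) w)],
      [forall a : A, forall w : Om1,
         nabla (rmul1 w a) == add2 (rmul2 (nabla w) a) (sigma (tens w (d a)))],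
      bimod_map2 sigma,
      [forall w : Om1, wedge (nabla w) == d1 w] &
      \big[add3/zero3]_(kj : 'I_2 * 'I_2)
         add3 (tens21 (nabla (lmul1 (g kj) (om kj.1))) (om kj.2))
              (sigma_id sigma (tens12 (lmul1 (g kj) (om kj.1)) (nabla (om kj.2))))
      == zero3].

Definition QLCs (g : Om2) : {set {ffun Om1 -> Om2} * {ffun Om2 -> Om2}} :=
  [set p | is_QLC g p.1 p.2].

Definition laplacian (ip : {ffun Om2 -> A}) (nabla : {ffun Om1 -> Om2}) : {ffun A -> A} :=
  [ffun a => ip (nabla (d a))].

Definition lapl_of (u v : A) : {ffun A -> A} :=
  [ffun a : A => addF8 (scalA a.1.2 u) (scalA a.2 v)].

Definition QLC_laplacians (g : Om2) (Ls : seq {ffun A -> A}) (n : nat) : Prop :=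
  (exists ip, is_inv_metric g ip) /\
  forall ip, is_inv_metric g ip ->
    [/\ #|QLCs g| = (n * size Ls)%N,
        forall p, p \in QLCs g -> laplacian ip p.1 \in Ls &
        forall L, L \in Ls -> #|[set p in QLCs g | laplacian ip p.1 == L]| = n].

Definition eigen1 (L : {ffun A -> A}) : {set A} := [set v | (v != zeroA) && (L v == v)].

(* Main.v *)
Require Import Defs.
From HB Require Import structures.
From mathcomp Require Import all_boot all_order all_algebra.
Set Implicit Arguments. Unset Strict Implicit. Unset Printing Implicit Defensive.

Record V4 (T : Type) := mkV4 { v00 : T; v01 : T; v10 : T; v11 : T }.
Record V8 (T : Type) := mkV8 { e000 : T; e001 : T; e010 : T; e011 : T;
                                e100 : T; e101 : T; e110 : T; e111 : T }.
Arguments mkV4 {T}. Arguments mkV8 {T}.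

Section Gen.
Variables (T : Type) (ad mu : T -> T -> T) (k : A -> T) (rf : T -> V4 T) (df : T -> T * T).
Definition zg := k zeroA.
Definition oneg := k oneA.
Definition R00 a := v00 (rf a).
Definition R01 a := v01 (rf a).
Definition R10 a := v10 (rf a).
Definition R11 a := v11 (rf a).
Definition zero1g : T * T := (zg, zg).
Definition add1g (w v : T * T) := (ad w.1 v.1, ad w.2 v.2).
Definition lmul1g a (w : T * T) := (mu a w.1, mu a w.2).
Definition omg (b : bool) : T * T := if b then (zg, oneg) else (oneg, zg).
Definition rmul1g (w : T * T) (a : T) : T * T :=
  (ad (mu w.1 (R00 a)) (mu w.2 (R10 a)), ad (mu w.1 (R01 a)) (mu w.2 (R11 a))).
Definition dg (a : T) : T * T := df a.

Definition zero2g := mkV4 zg zg zg zg.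
Definition add2g (P Q : V4 T) := mkV4 (ad (v00 P) (v00 Q)) (ad (v01 P) (v01 Q))
  (ad (v10 P) (v10 Q)) (ad (v11 P) (v11 Q)).
Definition lmul2g a (P : V4 T) := mkV4 (mu a (v00 P)) (mu a (v01 P))
  (mu a (v10 P)) (mu a (v11 P)).
Definition tens_of (r1 r2 : T * T) : V4 T := mkV4 r1.1 r2.1 r1.2 r2.2.
Definition tensg (w v : T * T) : V4 T := tens_of (rmul1g w v.1) (rmul1g w v.2).
Definition om2g k j := tensg (omg k) (omg j).
Definition rmul2g (P : V4 T) (a : T) : V4 T :=
  add2g (add2g (tensg (lmul1g (v00 P) (omg false)) (rmul1g (omg false) a))
               (tensg (lmul1g (v01 P) (omg false)) (rmul1g (omg true) a)))
        (add2g (tensg (lmul1g (v10 P) (omg true)) (rmul1g (omg false) a))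
               (tensg (lmul1g (v11 P) (omg true)) (rmul1g (omg true) a))).
Definition wedgeg (P : V4 T) : T :=
  ad (ad (mu (v00 P) (k yA)) (mu (v01 P) oneg))
     (ad (mu (v10 P) oneg) (mu (v11 P) (k (addF8 oneA yA)))).

Definition add3g (X Y : V8 T) := mkV8
  (ad (e000 X) (e000 Y)) (ad (e001 X) (e001 Y)) (ad (e010 X) (e010 Y))
  (ad (e011 X) (e011 Y)) (ad (e100 X) (e100 Y)) (ad (e101 X) (e101 Y))
  (ad (e110 X) (e110 Y)) (ad (e111 X) (e111 Y)).
Definition tens12_of (r00 r01 r10 r11 : T * T) : V8 T :=
  mkV8 r00.1 r01.1 r10.1 r11.1 r00.2 r01.2 r10.2 r11.2.
Definition tens12g (w : T * T) (U : V4 T) : V8 T :=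
  tens12_of (rmul1g w (v00 U)) (rmul1g w (v01 U)) (rmul1g w (v10 U)) (rmul1g w (v11 U)).
Definition tens21g (P : V4 T) (v : T * T) : V8 T :=
  add3g (add3g (tens12g (lmul1g (v00 P) (omg false)) (tensg (omg false) v))
               (tens12g (lmul1g (v01 P) (omg false)) (tensg (omg true) v)))
        (add3g (tens12g (lmul1g (v10 P) (omg true)) (tensg (omg false) v))
               (tens12g (lmul1g (v11 P) (omg true)) (tensg (omg true) v))).
Definition sigma_idg (s : V4 T -> V4 T) (X : V8 T) : V8 T :=
  add3g (add3g (add3g (tens21g (s (lmul2g (e000 X) (om2g false false))) (omg false))
                      (tens21g (s (lmul2g (e001 X) (om2g false false))) (omg true)))
               (add3g (tens21g (s (lmul2g (e010 X) (om2g false true))) (omg false))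
                      (tens21g (s (lmul2g (e011 X) (om2g false true))) (omg true))))
        (add3g (add3g (tens21g (s (lmul2g (e100 X) (om2g true false))) (omg false))
                      (tens21g (s (lmul2g (e101 X) (om2g true false))) (omg true)))
               (add3g (tens21g (s (lmul2g (e110 X) (om2g true true))) (omg false))
                      (tens21g (s (lmul2g (e111 X) (om2g true true))) (omg true)))).

Definition nabg (N0 N1 : V4 T) (w : T * T) : V4 T :=
  add2g (add2g (lmul2g w.1 N0) (tensg (dg w.1) (omg false)))
        (add2g (lmul2g w.2 N1) (tensg (dg w.2) (omg true))).
Definition sigg (S : V4 (V4 T)) (P : V4 T) : V4 T :=
  add2g (add2g (lmul2g (v00 P) (v00 S)) (lmul2g (v01 P) (v01 S)))
        (add2g (lmul2g (v10 P) (v10 S)) (lmul2g (v11 P) (v11 S))).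
Definition Sofg (N0 N1 : V4 T) : V4 (V4 T) :=
  mkV4 (add2g (nabg N0 N1 (rmul1g (omg false) (k xA))) (rmul2g N0 (k xA)))
       (add2g (nabg N0 N1 (rmul1g (omg false) (k yA))) (rmul2g N0 (k yA)))
       (add2g (nabg N0 N1 (rmul1g (omg true) (k xA))) (rmul2g N1 (k xA)))
       (add2g (nabg N0 N1 (rmul1g (omg true) (k yA))) (rmul2g N1 (k yA))).
Definition metterm (N0 N1 : V4 T) (S : V4 (V4 T)) (gk : T) (k0 j : bool) :=
  add3g (tens21g (nabg N0 N1 (lmul1g gk (omg k0))) (omg j))
        (sigma_idg (sigg S) (tens12g (lmul1g gk (omg k0)) (nabg N0 N1 (omg j)))).
Definition metg (g : V4 T) (N0 N1 : V4 T) : V8 T :=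
  let S := Sofg N0 N1 in
  add3g (add3g (metterm N0 N1 S (v00 g) false false) (metterm N0 N1 S (v01 g) false true))
        (add3g (metterm N0 N1 S (v10 g) true false) (metterm N0 N1 S (v11 g) true true)).
End Gen.

Section Frob.
Variables (T : Type) (ad mu : T -> T -> T) (k : A -> T).
Definition sqg a := mu a a.
Definition frg (al be ga : A) (a : T) :=
  ad (mu (k al) a) (ad (mu (k be) (sqg a)) (mu (k ga) (sqg (sqg a)))).
Definition rfrob (a : T) : V4 T :=
  mkV4 (frg zeroA yA (addF8 oneA yA) a)
       (frg zeroA (addF8 oneA (addF8 yA xA)) (addF8 oneA (addF8 yA xA)) a)
       (frg zeroA xA xA a) (frg zeroA (addF8 oneA yA) yA a).
Definition dfrob (a : T) : T * T :=
  (frg (addF8 oneA yA) (addF8 oneA xA) (addF8 yA xA) a,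
   frg (addF8 oneA xA) (addF8 yA xA) (addF8 oneA yA) a).
End Frob.

Definition rtab (a : A) : V4 A :=
  match a with
  | (false, false, false) => mkV4 (false, false, false) (false, false, false) (false, false, false) (false, false, false)
  | (true, false, false) => mkV4 (true, false, false) (false, false, false) (false, false, false) (true, false, false)
  | (false, true, false) => mkV4 (true, false, false) (false, false, true) (true, false, false) (false, true, false)
  | (true, true, false) => mkV4 (false, false, false) (false, false, true) (true, false, false) (true, true, false)
  | (false, false, true) => mkV4 (true, false, true) (true, false, false) (true, true, false) (false, false, false)
  | (true, false, true) => mkV4 (false, false, true) (true, false, false) (true, true, false) (true, false, false)
  | (false, true, true) => mkV4 (false, false, true) (true, false, true) (false, true, false) (false, true, false)
  | (true, true, true) => mkV4 (true, false, true) (true, false, true) (false, true, false) (true, true, false)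
  end.
Definition dtab (a : A) : A * A :=
  match a with
  | (false, false, false) => ((false, false, false), (false, false, false))
  | (true, false, false) => ((false, false, false), (false, false, false))
  | (false, true, false) => ((false, false, false), (true, false, false))
  | (true, true, false) => ((false, false, false), (true, false, false))
  | (false, false, true) => ((true, false, false), (false, false, false))
  | (true, false, true) => ((true, false, false), (false, false, false))
  | (false, true, true) => ((true, false, false), (true, false, false))
  | (true, true, true) => ((true, false, false), (true, false, false))
  end.


Lemma addF8A : associative addF8.
Proof. by move=> [[[] []] []] [[[] []] []] [[[] []] []]. Qed.
Lemma addF8C : commutative addF8.
Proof. by move=> [[[] []] []] [[[] []] []]. Qed.
Lemma add0F8 : left_id zeroA addF8.
Proof. by move=> [[[] []] []]. Qed.
Lemma addF80 : right_id zeroA addF8.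
Proof. by move=> [[[] []] []]. Qed.
Lemma addF8K a : addF8 a a = zeroA.
Proof. by move: a => [[[] []] []]. Qed.
Lemma mulF8A : associative mulF8.
Proof. by move=> [[[] []] []] [[[] []] []] [[[] []] []]. Qed.
Lemma mulF8C : commutative mulF8.
Proof. by move=> [[[] []] []] [[[] []] []]. Qed.
Lemma mulF8Dl : left_distributive mulF8 addF8.
Proof. by move=> [[[] []] []] [[[] []] []] [[[] []] []]. Qed.
Lemma mulF8Dr : right_distributive mulF8 addF8.
Proof. by move=> [[[] []] []] [[[] []] []] [[[] []] []]. Qed.
Lemma mul1F8 : left_id oneA mulF8.
Proof. by move=> [[[] []] []]. Qed.
Lemma mulF81 : right_id oneA mulF8.
Proof. by move=> [[[] []] []]. Qed.
Lemma mul0F8 : left_zero zeroA mulF8.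
Proof. by move=> [[[] []] []]. Qed.
Lemma mulF80 : right_zero zeroA mulF8.
Proof. by move=> [[[] []] []]. Qed.
Lemma addF8ACA a b c e : addF8 (addF8 a b) (addF8 c e) = addF8 (addF8 a c) (addF8 b e).
Proof. by rewrite -!addF8A (addF8A b) (addF8C b) !addF8A. Qed.

HB.instance Definition _ := Monoid.isComLaw.Build A zeroA addF8 addF8A addF8C add0F8.

Lemma add1A : associative add1.
Proof. by move=> w v u; apply/ffunP => i; rewrite !ffunE addF8A. Qed.
Lemma add1C : commutative add1.
Proof. by move=> w v; apply/ffunP => i; rewrite !ffunE addF8C. Qed.
Lemma add01 : left_id zero1 add1.
Proof. by move=> w; apply/ffunP => i; rewrite !ffunE add0F8. Qed.
HB.instance Definition _ := Monoid.isComLaw.Build Om1 zero1 add1 add1A add1C add01.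
Lemma add2A : associative add2.
Proof. by move=> w v u; apply/ffunP => i; rewrite !ffunE addF8A. Qed.
Lemma add2C : commutative add2.
Proof. by move=> w v; apply/ffunP => i; rewrite !ffunE addF8C. Qed.
Lemma add02 : left_id zero2 add2.
Proof. by move=> w; apply/ffunP => i; rewrite !ffunE add0F8. Qed.
HB.instance Definition _ := Monoid.isComLaw.Build Om2 zero2 add2 add2A add2C add02.
Lemma add3A : associative add3.
Proof. by move=> w v u; apply/ffunP => i; rewrite !ffunE addF8A. Qed.
Lemma add3C : commutative add3.
Proof. by move=> w v; apply/ffunP => i; rewrite !ffunE addF8C. Qed.
Lemma add03 : left_id zero3 add3.
Proof. by move=> w; apply/ffunP => i; rewrite !ffunE add0F8. Qed.
HB.instance Definition _ := Monoid.isComLaw.Build Om3 zero3 add3 add3A add3C add03.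

Definition o0 : 'I_2 := ord0.
Definition o1 : 'I_2 := lift ord0 ord0.
Lemma I2P (i : 'I_2) : i = o0 \/ i = o1.
Proof. case: i => [[|[|?]] Hi] //; [left|right]; exact: val_inj. Qed.

Section Bigs.
Variables (R : Type) (z : R) (op : Monoid.com_law z).
Lemma big_I2 (F : 'I_2 -> R) : \big[op/z]_(i < 2) F i = op (F o0) (F o1).
Proof. by rewrite big_ord_recl big_ord_recl big_ord0 Monoid.mulm1. Qed.
Lemma big_I22 (F : 'I_2 * 'I_2 -> R) :
  \big[op/z]_(p : 'I_2 * 'I_2) F p =
  op (op (F (o0, o0)) (F (o0, o1))) (op (F (o1, o0)) (F (o1, o1))).
Proof.
rewrite (eq_bigr (fun p => (fun i j => F (i, j)) p.1 p.2)); last by case.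
by rewrite -(pair_bigA _ (fun i j => F (i, j))) big_I2 !big_I2.
Qed.
Lemma big_I222 (F : 'I_2 * 'I_2 * 'I_2 -> R) :
  \big[op/z]_(p : 'I_2 * 'I_2 * 'I_2) F p =
  op (op (op (F (o0, o0, o0)) (F (o0, o0, o1))) (op (F (o0, o1, o0)) (F (o0, o1, o1))))
     (op (op (F (o1, o0, o0)) (F (o1, o0, o1))) (op (F (o1, o1, o0)) (F (o1, o1, o1)))).
Proof.
rewrite (eq_bigr (fun p => (fun i j => F (i, j)) p.1 p.2)); last by case.
by rewrite -(pair_bigA _ (fun i j => F (i, j))) big_I22 !big_I2.
Qed.
End Bigs.

Notation ida := (fun a : A => a).
Notation add1c := (add1g addF8).
Notation lmul1c := (lmul1g mulF8).
Notation omc := (omg ida).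
Notation rmul1c := (rmul1g addF8 mulF8 rtab).
Notation dc := (dg dtab).
Notation add2c := (add2g addF8).
Notation lmul2c := (lmul2g mulF8).
Notation tensc := (tensg addF8 mulF8 rtab).
Notation rmul2c := (rmul2g addF8 mulF8 ida rtab).
Notation wedgec := (wedgeg addF8 mulF8 ida).
Notation add3c := (add3g addF8).
Notation tens12c := (tens12g addF8 mulF8 rtab).
Notation tens21c := (tens21g addF8 mulF8 ida rtab).
Notation sigma_idc := (sigma_idg addF8 mulF8 ida rtab).
Notation nabc := (nabg addF8 mulF8 ida rtab dtab).
Notation sigc := (sigg addF8 mulF8).
Notation Sofc := (Sofg addF8 mulF8 ida rtab dtab).
Notation metc := (metg addF8 mulF8 ida rtab dtab).

Definition c1 (w : Om1) : A * A := (w o0, w o1).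
Definition c2 (T : Om2) : V4 A := mkV4 (T (o0, o0)) (T (o0, o1)) (T (o1, o0)) (T (o1, o1)).
Definition c3 (X : Om3) : V8 A := mkV8 (X (o0, o0, o0)) (X (o0, o0, o1)) (X (o0, o1, o0))
  (X (o0, o1, o1)) (X (o1, o0, o0)) (X (o1, o0, o1)) (X (o1, o1, o0)) (X (o1, o1, o1)).

Lemma c1_inj : injective c1.
Proof.
move=> w v [E0 E1]; apply/ffunP => i; by case: (I2P i) => ->.
Qed.
Lemma c2_inj : injective c2.
Proof.
move=> w v [E0 E1 E2 E3]; apply/ffunP => -[i j].
by case: (I2P i) => ->; case: (I2P j) => ->.
Qed.
Lemma c3_inj : injective c3.
Proof.
move=> w v [E0 E1 E2 E3 E4 E5 E6 E7]; apply/ffunP => -[[i j] l].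
by case: (I2P i) => ->; case: (I2P j) => ->; case: (I2P l) => ->.
Qed.

Definition mk2 (P : V4 A) : Om2 := [ffun kj : 'I_2 * 'I_2 =>
  if val kj.1 == 0 then (if val kj.2 == 0 then v00 P else v01 P)
  else (if val kj.2 == 0 then v10 P else v11 P)].
Lemma c2_mk2 P : c2 (mk2 P) = P.
Proof. by case: P => *; rewrite /c2 !ffunE. Qed.
Lemma c1_mk1 a b : c1 (mk1 a b) = (a, b).
Proof. by rewrite /c1 !ffunE. Qed.

Lemma c1_add1 w v : c1 (add1 w v) = add1c (c1 w) (c1 v).
Proof. by rewrite /c1 !ffunE. Qed.
Lemma c1_lmul1 a w : c1 (lmul1 a w) = lmul1c a (c1 w).
Proof. by rewrite /c1 !ffunE. Qed.
Lemma c1_zero1 : c1 zero1 = (zeroA, zeroA).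
Proof. by rewrite /c1 !ffunE. Qed.
Lemma c1_om0 : c1 (om o0) = omc false.
Proof. by rewrite /c1 !ffunE. Qed.
Lemma c1_om1 : c1 (om o1) = omc true.
Proof. by rewrite /c1 !ffunE. Qed.
Lemma c1_omy0 : c1 (om_y o0) = (oneA, xA).
Proof. by rewrite /om_y /= c1_mk1. Qed.
Lemma c1_omy1 : c1 (om_y o1) = (oneA, yA).
Proof. by rewrite /om_y /= c1_mk1. Qed.
Lemma c1_omx0 : c1 (om_x o0) = (addF8 oneA xA, oneA).
Proof. by rewrite /om_x /= c1_mk1. Qed.
Lemma c1_omx1 : c1 (om_x o1) = (addF8 oneA yA, zeroA).
Proof. by rewrite /om_x /= c1_mk1. Qed.

Lemma c1_if b (w v : Om1) : c1 (if b then w else v) = if b then c1 w else c1 v.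
Proof. by case: b. Qed.

Lemma c1_omr0 a : c1 (om_r o0 a) =
  (R00 rtab a, R01 rtab a).
Proof.
rewrite /om_r !c1_add1 !c1_if c1_om0 c1_omy0 c1_omx0 c1_zero1.
by case: a => [[[] []] []].
Qed.
Lemma c1_omr1 a : c1 (om_r o1 a) =
  (R10 rtab a, R11 rtab a).
Proof.
rewrite /om_r !c1_add1 !c1_if c1_om1 c1_omy1 c1_omx1 c1_zero1.
by case: a => [[[] []] []].
Qed.
Lemma c1_rmul1 w a : c1 (rmul1 w a) = rmul1c (c1 w) a.
Proof.
rewrite /rmul1 big_I2 c1_add1 !c1_lmul1 c1_omr0 c1_omr1.
by rewrite /add1g /lmul1g /rmul1g /=.
Qed.
Lemma c1_d a : c1 (d a) = dc a.
Proof. by rewrite /d c1_mk1; case: a => [[[] []] []]. Qed.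

Lemma c2_add2 T U : c2 (add2 T U) = add2c (c2 T) (c2 U).
Proof. by rewrite /c2 !ffunE. Qed.
Lemma c2_lmul2 a T : c2 (lmul2 a T) = lmul2c a (c2 T).
Proof. by rewrite /c2 !ffunE. Qed.
Lemma c2_zero2 : c2 zero2 = mkV4 zeroA zeroA zeroA zeroA.
Proof. by rewrite /c2 !ffunE. Qed.
Lemma c2_tens w v : c2 (tens w v) = tensc (c1 w) (c1 v).
Proof.
rewrite /c2 /tens !ffunE /=.
by rewrite -[rmul1 w (v o0) o0]/((c1 (rmul1 w (v o0))).1)
  -[rmul1 w (v o0) o1]/((c1 (rmul1 w (v o0))).2)
  -[rmul1 w (v o1) o0]/((c1 (rmul1 w (v o1))).1)
  -[rmul1 w (v o1) o1]/((c1 (rmul1 w (v o1))).2) !c1_rmul1.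
Qed.
Lemma c2_om2 k j : c2 (om2 k j) = tensc (c1 (om k)) (c1 (om j)).
Proof. exact: c2_tens. Qed.
Lemma c2_rmul2 T a : c2 (rmul2 T a) = rmul2c (c2 T) a.
Proof.
rewrite /rmul2 big_I22 /= !c2_add2 !c2_tens !c1_lmul1 !c1_rmul1 c1_om0 c1_om1.
by [].
Qed.
Lemma wedge_c T : wedge T = wedgec (c2 T).
Proof. by rewrite /wedge big_I22 /=. Qed.
Definition d1c (w : A * A) : A :=
  addF8 (wedgec (tensc (dc w.1) (omc false))) (wedgec (tensc (dc w.2) (omc true))).
Lemma d1_c w : d1 w = d1c (c1 w).
Proof. by rewrite /d1 big_I2 !wedge_c !c2_tens !c1_d c1_om0 c1_om1. Qed.

Lemma c3_add3 X Y : c3 (add3 X Y) = add3c (c3 X) (c3 Y).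
Proof. by rewrite /c3 !ffunE. Qed.
Lemma c3_tens12 w U : c3 (tens12 w U) = tens12c (c1 w) (c2 U).
Proof.
rewrite /c3 /tens12 !ffunE /=.
have E : forall a i, rmul1 w a i = (if val i == 0 then (c1 (rmul1 w a)).1 else (c1 (rmul1 w a)).2).
  by move=> a i; case: (I2P i) => ->.
by rewrite !E !c1_rmul1.
Qed.
Lemma c3_tens21 T v : c3 (tens21 T v) = tens21c (c2 T) (c1 v).
Proof.
rewrite /tens21 big_I22 /= !c3_add3 !c3_tens12 !c2_tens !c1_lmul1 c1_om0 c1_om1.
by [].
Qed.
Lemma c3_add3_8 a b c d e f g h :
  c3 (add3 (add3 (add3 a b) (add3 c d)) (add3 (add3 e f) (add3 g h))) =
  add3c (add3c (add3c (c3 a) (c3 b)) (add3c (c3 c) (c3 d)))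
        (add3c (add3c (c3 e) (c3 f)) (add3c (c3 g) (c3 h))).
Proof. by rewrite !c3_add3. Qed.
Lemma c3_big222 (F : 'I_2 * 'I_2 * 'I_2 -> Om3) (G : 'I_2 * 'I_2 * 'I_2 -> V8 A) :
  (forall p, c3 (F p) = G p) ->
  c3 (\big[add3/zero3]_p F p) =
  add3c (add3c (add3c (G (o0, o0, o0)) (G (o0, o0, o1))) (add3c (G (o0, o1, o0)) (G (o0, o1, o1))))
     (add3c (add3c (G (o1, o0, o0)) (G (o1, o0, o1))) (add3c (G (o1, o1, o0)) (G (o1, o1, o1)))).
Proof. by move=> E; rewrite big_I222 c3_add3_8 !E. Qed.
Definition bo (i : 'I_2) : bool := val i != 0.
Lemma c1_om i : c1 (om i) = omc (bo i).
Proof. by case: (I2P i) => ->; rewrite ?c1_om0 ?c1_om1. Qed.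
Lemma c3_sigma_id (s : Om2 -> Om2) (f : V4 A -> V4 A) X :
  (forall T, c2 (s T) = f (c2 T)) -> c3 (sigma_id s X) = sigma_idc f (c3 X).
Proof.
move=> Hs. rewrite /sigma_id.
rewrite (@c3_big222 _ (fun p => tens21c (f (lmul2c (X p) (om2g addF8 mulF8 ida rtab (bo p.1.1) (bo p.1.2)))) (omc (bo p.2)))).
  by [].
move=> p; rewrite c3_tens21 Hs c2_lmul2 c2_om2 !c1_om.
by [].
Qed.
Lemma c3_zero3 : c3 zero3 = mkV8 zeroA zeroA zeroA zeroA zeroA zeroA zeroA zeroA.
Proof. by rewrite /c3 !ffunE. Qed.
Definition g0c : V4 A := mkV4 xA oneA oneA (addF8 oneA yA).
Lemma c2_gmetric beta : c2 (gmetric beta) = lmul2c beta g0c.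
Proof. by rewrite /gmetric c2_lmul2 /c2 !ffunE. Qed.

Lemma c3_big22 (F : 'I_2 * 'I_2 -> Om3) (G : 'I_2 * 'I_2 -> V8 A) :
  (forall p, c3 (F p) = G p) ->
  c3 (\big[add3/zero3]_p F p) =
  add3c (add3c (G (o0, o0)) (G (o0, o1))) (add3c (G (o1, o0)) (G (o1, o1))).
Proof. by move=> E; rewrite big_I22 !c3_add3 !E. Qed.
Lemma c1_big22 (F : 'I_2 * 'I_2 -> Om1) (G : 'I_2 * 'I_2 -> A * A) :
  (forall p, c1 (F p) = G p) ->
  c1 (\big[add1/zero1]_p F p) =
  add1c (add1c (G (o0, o0)) (G (o0, o1))) (add1c (G (o1, o0)) (G (o1, o1))).
Proof. by move=> E; rewrite big_I22 !c1_add1 !E. Qed.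

Lemma w_decomp (w : Om1) : w = add1 (lmul1 (w o0) (om o0)) (lmul1 (w o1) (om o1)).
Proof.
apply: c1_inj; rewrite c1_add1 !c1_lmul1 c1_om0 c1_om1 /c1 /add1g /lmul1g /=.
by rewrite !mulF81 !mulF80 addF80 add0F8.
Qed.

Lemma c2_om2_00 : c2 (om2 o0 o0) = mkV4 oneA zeroA zeroA zeroA.
Proof. by rewrite c2_om2 c1_om0. Qed.
Lemma c2_om2_01 : c2 (om2 o0 o1) = mkV4 zeroA oneA zeroA zeroA.
Proof. by rewrite c2_om2 c1_om0 c1_om1. Qed.
Lemma c2_om2_10 : c2 (om2 o1 o0) = mkV4 zeroA zeroA oneA zeroA.
Proof. by rewrite c2_om2 c1_om0 c1_om1. Qed.
Lemma c2_om2_11 : c2 (om2 o1 o1) = mkV4 zeroA zeroA zeroA oneA.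
Proof. by rewrite c2_om2 c1_om1. Qed.

Lemma T_decomp (T : Om2) : T =
  add2 (add2 (lmul2 (T (o0, o0)) (om2 o0 o0)) (lmul2 (T (o0, o1)) (om2 o0 o1)))
       (add2 (lmul2 (T (o1, o0)) (om2 o1 o0)) (lmul2 (T (o1, o1)) (om2 o1 o1))).
Proof.
apply: c2_inj; rewrite !c2_add2 !c2_lmul2 c2_om2_00 c2_om2_01 c2_om2_10 c2_om2_11.
rewrite /c2 /add2g /lmul2g /=.
by rewrite !mulF81 !mulF80 !addF80 !add0F8.
Qed.

Section NablaForm.
Variable nabla : {ffun Om1 -> Om2}.
Hypothesis Ha : [forall w : Om1, forall v : Om1, nabla (add1 w v) == add2 (nabla w) (nabla v)].
Hypothesis Hl : [forall a : A, forall w : Om1,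
         nabla (lmul1 a w) == add2 (lmul2 a (nabla w)) (tens (d a) w)].
Lemma nabla_form w :
  c2 (nabla w) = nabc (c2 (nabla (om o0))) (c2 (nabla (om o1))) (c1 w).
Proof.
rewrite {1}(w_decomp w) (eqP (forallP (forallP Ha _) _)).
rewrite (eqP (forallP (forallP Hl _) (om o0))) (eqP (forallP (forallP Hl _) (om o1))).
rewrite !c2_add2 !c2_lmul2 !c2_tens !c1_d c1_om0 c1_om1.
by [].
Qed.
End NablaForm.

Definition Sbasis (sigma : {ffun Om2 -> Om2}) : V4 (V4 A) :=
  mkV4 (c2 (sigma (om2 o0 o0))) (c2 (sigma (om2 o0 o1)))
       (c2 (sigma (om2 o1 o0))) (c2 (sigma (om2 o1 o1))).

Lemma sigma_form (sigma : {ffun Om2 -> Om2}) : bimod_map2 sigma ->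
  forall T, c2 (sigma T) = sigc (Sbasis sigma) (c2 T).
Proof.
case/and3P => /forallP Ha /forallP Hl _ T.
rewrite {1}(T_decomp T) !(eqP (forallP (Ha _) _)) !(eqP (forallP (Hl _) _)).
rewrite !c2_add2 !c2_lmul2.
by [].
Qed.

Lemma addF8_swap a b c : a = addF8 b c -> c = addF8 a b.
Proof. move=> ->; move: a b c => _ [[[] []] []] [[[] []] []]; by []. Qed.
Lemma add2c_swap (X Y Z : V4 A) : X = add2c Y Z -> Z = add2c X Y.
Proof.
case: X Y Z => [? ? ? ?] [? ? ? ?] [? ? ? ?] [E1 E2 E3 E4].
by rewrite /add2g /= -(addF8_swap E1) -(addF8_swap E2) -(addF8_swap E3) -(addF8_swap E4).
Qed.
Lemma d_x : d xA = om o0.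
Proof. by apply: c1_inj; rewrite c1_d ?c1_om1. Qed.
Lemma d_y : d yA = om o1.
Proof. by apply: c1_inj; rewrite c1_d ?c1_om1. Qed.

Section QLCForm.
Variables (g : Om2) (nabla : {ffun Om1 -> Om2}) (sigma : {ffun Om2 -> Om2}).
Hypothesis H : is_QLC g nabla sigma.
Let N0 := c2 (nabla (om o0)).
Let N1 := c2 (nabla (om o1)).
Lemma QLC_nabla w : c2 (nabla w) = nabc N0 N1 (c1 w).
Proof. by case/and5P: H => Ha Hl _ _ _; apply: nabla_form. Qed.
Lemma QLC_S : Sbasis sigma = Sofc N0 N1.
Proof.
case/and5P: H => _ _ /forallP Hr _ _.
have E : forall (k : 'I_2) (a : A) (j : 'I_2), d a = om j ->
    c2 (sigma (om2 k j)) = add2c (nabc N0 N1 (rmul1c (omc (bo k)) a)) (rmul2c (c2 (nabla (om k))) a).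
  move=> k a j Ed; have := eqP (forallP (Hr a) (om k)).
  rewrite Ed -/(om2 k j) => /(congr1 c2).
  rewrite c2_add2 c2_rmul2 QLC_nabla c1_rmul1 c1_om => /add2c_swap.
  by [].
rewrite /Sbasis (E o0 xA o0 d_x) (E o0 yA o1 d_y) (E o1 xA o0 d_x) (E o1 yA o1 d_y).
by [].
Qed.
Lemma QLC_sigma T : c2 (sigma T) = sigc (Sofc N0 N1) (c2 T).
Proof.
case/and5P: H => _ _ _ Hb _.
by rewrite (sigma_form Hb) QLC_S.
Qed.
Lemma QLC_torsion : wedgec N0 = zeroA /\ wedgec N1 = zeroA.
Proof.
case/and5P: H => _ _ _ _ /andP [/forallP Ht _].
have E : forall i, d1 (om i) = zeroA.
  by move=> i; rewrite d1_c c1_om; case: (bo i).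
by split; rewrite -wedge_c (eqP (Ht _)) E.
Qed.
Definition gco (P : V4 A) (p : 'I_2 * 'I_2) : A :=
  if bo p.1 then (if bo p.2 then v11 P else v10 P) else (if bo p.2 then v01 P else v00 P).
Definition zero8 : V8 A := mkV8 zeroA zeroA zeroA zeroA zeroA zeroA zeroA zeroA.
Lemma QLC_metric : metc (c2 g) N0 N1 = zero8.
Proof.
case/and5P: H => _ _ _ _ /andP [_ /eqP Hm].
have := congr1 c3 Hm; rewrite c3_zero3.
rewrite (@c3_big22 _ (fun p => metterm addF8 mulF8 ida rtab dtab N0 N1 (Sofc N0 N1) (gco (c2 g) p) (bo p.1) (bo p.2))).
  by move=> E; exact: E.
move=> p.
have -> : g p = gco (c2 g) p.
  by case: p => i j; case: (I2P i) => ->; case: (I2P j) => ->.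
rewrite c3_add3 c3_tens21 QLC_nabla c1_lmul1 !c1_om.
rewrite (@c3_sigma_id _ (sigc (Sofc N0 N1)) _ QLC_sigma) c3_tens12 c1_lmul1 c1_om QLC_nabla c1_om.
by [].
Qed.
End QLCForm.

Definition smono := seq nat.
Definition spoly := seq smono.
Fixpoint mle (m1 m2 : smono) : bool :=
  match m1, m2 with
  | [::], _ => true
  | _ :: _, [::] => false
  | a :: s, b :: t => (a < b) || ((a == b) && mle s t)
  end.
Fixpoint cancel2 (s : spoly) : spoly :=
  match s with
  | a :: ((b :: t) as s') => if a == b then cancel2 t else a :: cancel2 s'
  | _ => s
  end.
Definition pnorm (p : spoly) : spoly := cancel2 (sort mle p).
Definition mmul (m1 m2 : smono) : smono := sort leq (undup (m1 ++ m2)).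
Definition padd (p q : spoly) : spoly := pnorm (p ++ q).
Definition pmul (p q : spoly) : spoly := pnorm (allpairs mmul p q).

Definition mev (e : nat -> bool) (m : smono) := all e m.
Definition pev (e : nat -> bool) (p : spoly) := foldr (fun m b => mev e m (+) b) false p.

Section PolySound.
Variable e : nat -> bool.
Lemma pev_cons m p : pev e (m :: p) = mev e m (+) pev e p.
Proof. by []. Qed.
Lemma pev_cat p q : pev e (p ++ q) = pev e p (+) pev e q.
Proof. by elim: p => //= m p ->; rewrite addbA. Qed.
Lemma pev_big p : pev e p = \big[addb/false]_(m <- p) mev e m.
Proof. by elim: p => [|m p IH]; rewrite ?big_nil ?big_cons //= IH. Qed.
Lemma pev_perm p q : perm_eq p q -> pev e p = pev e q.
Proof. by move=> Hp; rewrite !pev_big (perm_big _ Hp). Qed.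
Lemma pev_cancel2 p : pev e (cancel2 p) = pev e p.
Proof.
elim: {p}(size p).+1 {-2}p (ltnSn (size p)) => // n IH [|a [|b t]] // Hs.
have -> : cancel2 [:: a, b & t] = if a == b then cancel2 t else a :: cancel2 (b :: t) by [].
rewrite /= ltnS in Hs.
case: eqP => [<-|_].
  by rewrite IH; [rewrite /= addbA addbb | exact: ltnW Hs].
by rewrite -[pev e (a :: cancel2 _)]/(mev e a (+) pev e (cancel2 (b :: t))) IH.
Qed.
Lemma pev_pnorm p : pev e (pnorm p) = pev e p.
Proof. by rewrite /pnorm pev_cancel2; apply: pev_perm; rewrite perm_sort. Qed.
Lemma pev_padd p q : pev e (padd p q) = pev e p (+) pev e q.
Proof. by rewrite /padd pev_pnorm pev_cat. Qed.
Lemma mev_mmul m1 m2 : mev e (mmul m1 m2) = mev e m1 && mev e m2.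
Proof. by rewrite /mev /mmul all_sort all_undup all_cat. Qed.
Lemma pev_pmul p q : pev e (pmul p q) = pev e p && pev e q.
Proof.
rewrite /pmul pev_pnorm; elim: p => [|m p IH]; first by [].
have -> : allpairs mmul (m :: p) q = map (mmul m) q ++ allpairs mmul p q by [].
rewrite pev_cat IH [pev e (m :: p)]/= andb_addl; congr (_ (+) _).
clear IH; elim: q => [|m' q IHq]; first by rewrite /= andbF.
by rewrite map_cons !pev_cons mev_mmul IHq andb_addr.
Qed.
End PolySound.

Definition pA := (spoly * spoly * spoly)%type.
Definition paddA (a b : pA) : pA := (padd a.1.1 b.1.1, padd a.1.2 b.1.2, padd a.2 b.2).
Definition pscal (c : spoly) (b : pA) : pA := (pmul c b.1.1, pmul c b.1.2, pmul c b.2).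
Definition pmuly (b : pA) : pA := (b.2, b.1.1, padd b.1.2 b.2).
Definition pmulA (a b : pA) : pA :=
  paddA (pscal a.1.1 b) (paddA (pscal a.1.2 (pmuly b)) (pscal a.2 (pmuly (pmuly b)))).
Definition pb (b : bool) : spoly := if b then [:: [::]] else [::].
Definition pconst (c : A) : pA := (pb c.1.1, pb c.1.2, pb c.2).
Definition pvar (i : nat) : pA := ([:: [:: 3 * i]], [:: [:: 3 * i + 1]], [:: [:: 3 * i + 2]]).
Definition iA (e : nat -> bool) (a : pA) : A := (pev e a.1.1, pev e a.1.2, pev e a.2).

Lemma xorb_addb a b : xorb a b = a (+) b.
Proof. by case: a. Qed.
Section ASound.
Variable e : nat -> bool.
Lemma iA_add a b : iA e (paddA a b) = addF8 (iA e a) (iA e b).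
Proof. by rewrite /iA /paddA !pev_padd /addF8 /mkA /= !xorb_addb. Qed.
Lemma scalA_E c (b : A) : scalA c b = (c && b.1.1, c && b.1.2, c && b.2).
Proof. by case: c; case: b => [[? ?] ?]. Qed.
Lemma iA_scal c b : iA e (pscal c b) = scalA (pev e c) (iA e b).
Proof. by rewrite scalA_E /iA /pscal !pev_pmul. Qed.
Lemma iA_muly b : iA e (pmuly b) = muly (iA e b).
Proof. by rewrite /iA /pmuly pev_padd /muly /mkA /= xorb_addb. Qed.
Lemma iA_mul a b : iA e (pmulA a b) = mulF8 (iA e a) (iA e b).
Proof. by rewrite /pmulA !iA_add !iA_scal !iA_muly. Qed.
Lemma iA_const c : iA e (pconst c) = c.
Proof. by case: c => [[[] []] []]. Qed.
End ASound.

Section Morph.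
Variables (T1 T2 : Type) (ad1 mu1 : T1 -> T1 -> T1) (k1 : A -> T1)
          (rf1 : T1 -> V4 T1) (df1 : T1 -> T1 * T1)
          (ad2 mu2 : T2 -> T2 -> T2) (k2 : A -> T2)
          (rf2 : T2 -> V4 T2) (df2 : T2 -> T2 * T2) (phi : T1 -> T2).
Hypothesis Had : forall a b, phi (ad1 a b) = ad2 (phi a) (phi b).
Hypothesis Hmu : forall a b, phi (mu1 a b) = mu2 (phi a) (phi b).
Hypothesis Hk : forall c, phi (k1 c) = k2 c.
Definition m2 (w : T1 * T1) : T2 * T2 := (phi w.1, phi w.2).
Definition m4 (P : V4 T1) : V4 T2 := mkV4 (phi (v00 P)) (phi (v01 P)) (phi (v10 P)) (phi (v11 P)).
Definition m8 (X : V8 T1) : V8 T2 := mkV8 (phi (e000 X)) (phi (e001 X)) (phi (e010 X))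
  (phi (e011 X)) (phi (e100 X)) (phi (e101 X)) (phi (e110 X)) (phi (e111 X)).
Definition m44 (S : V4 (V4 T1)) : V4 (V4 T2) := mkV4 (m4 (v00 S)) (m4 (v01 S)) (m4 (v10 S)) (m4 (v11 S)).

Lemma phi_fr al be ga a : phi (frg ad1 mu1 k1 al be ga a) = frg ad2 mu2 k2 al be ga (phi a).
Proof. by rewrite /frg /sqg !Had !Hmu !Hk. Qed.
Lemma m4_rfrob a : m4 (rfrob ad1 mu1 k1 a) = rfrob ad2 mu2 k2 (phi a).
Proof. by rewrite /m4 /rfrob /= !phi_fr. Qed.
Lemma m2_dfrob a : m2 (dfrob ad1 mu1 k1 a) = dfrob ad2 mu2 k2 (phi a).
Proof. by rewrite /m2 /dfrob /= !phi_fr. Qed.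
Hypothesis Hrf : forall a, m4 (rf1 a) = rf2 (phi a).
Hypothesis Hdf : forall a, m2 (df1 a) = df2 (phi a).
Lemma phiR a : [/\ phi (R00 rf1 a) = R00 rf2 (phi a), phi (R01 rf1 a) = R01 rf2 (phi a),
   phi (R10 rf1 a) = R10 rf2 (phi a) & phi (R11 rf1 a) = R11 rf2 (phi a)].
Proof.
rewrite /R00 /R01 /R10 /R11 -[phi (v00 _)]/(v00 (m4 (rf1 a))) -[phi (v01 _)]/(v01 (m4 (rf1 a))).
by rewrite -[phi (v10 _)]/(v10 (m4 (rf1 a))) -[phi (v11 _)]/(v11 (m4 (rf1 a))) Hrf.
Qed.
Lemma m2_rmul1 w a : m2 (rmul1g ad1 mu1 rf1 w a) = rmul1g ad2 mu2 rf2 (m2 w) (phi a).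
Proof.
case: (phiR a) => E0 E1 E2 E3.
by rewrite /m2 /rmul1g /= !Had !Hmu E0 E1 E2 E3.
Qed.
Lemma m2_om b : m2 (omg k1 b) = omg k2 b.
Proof. by case: b; rewrite /m2 /omg /zg /oneg /= !Hk. Qed.
Lemma m2_add1 w v : m2 (add1g ad1 w v) = add1g ad2 (m2 w) (m2 v).
Proof. by rewrite /m2 /= !Had. Qed.
Lemma m2_lmul1 a w : m2 (lmul1g mu1 a w) = lmul1g mu2 (phi a) (m2 w).
Proof. by rewrite /m2 /= !Hmu. Qed.
Lemma m2_d a : m2 (dg df1 a) = dg df2 (phi a).
Proof. exact: Hdf. Qed.
Lemma m4_add2 P Q : m4 (add2g ad1 P Q) = add2g ad2 (m4 P) (m4 Q).
Proof. by rewrite /m4 /= !Had. Qed.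
Lemma m4_add2E P Q P' Q' : m4 P = P' -> m4 Q = Q' -> m4 (add2g ad1 P Q) = add2g ad2 P' Q'.
Proof. by move=> <- <-; rewrite m4_add2. Qed.
Lemma m4_lmul2 a P : m4 (lmul2g mu1 a P) = lmul2g mu2 (phi a) (m4 P).
Proof. by rewrite /m4 /= !Hmu. Qed.
Lemma m4_tens w v : m4 (tensg ad1 mu1 rf1 w v) = tensg ad2 mu2 rf2 (m2 w) (m2 v).
Proof.
rewrite /tensg -!m2_rmul1.
by case: (rmul1g ad1 mu1 rf1 w v.1) => ? ?; case: (rmul1g ad1 mu1 rf1 w v.2).
Qed.
Lemma m4_rmul2 P a : m4 (rmul2g ad1 mu1 k1 rf1 P a) = rmul2g ad2 mu2 k2 rf2 (m4 P) (phi a).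
Proof. by rewrite /rmul2g !m4_add2 !m4_tens !m2_lmul1 !m2_rmul1 !m2_om. Qed.
Lemma m8_add3 X Y : m8 (add3g ad1 X Y) = add3g ad2 (m8 X) (m8 Y).
Proof. by rewrite /m8 /= !Had. Qed.
Lemma m8_add3E X Y X' Y' : m8 X = X' -> m8 Y = Y' -> m8 (add3g ad1 X Y) = add3g ad2 X' Y'.
Proof. by move=> <- <-; rewrite m8_add3. Qed.
Lemma m8_tens12 w U : m8 (tens12g ad1 mu1 rf1 w U) = tens12g ad2 mu2 rf2 (m2 w) (m4 U).
Proof.
rewrite /tens12g /m4 /= -!m2_rmul1.
by case: (rmul1g ad1 mu1 rf1 w (v00 U)) => ? ?; case: (rmul1g ad1 mu1 rf1 w (v01 U)) => ? ?;
   case: (rmul1g ad1 mu1 rf1 w (v10 U)) => ? ?; case: (rmul1g ad1 mu1 rf1 w (v11 U)).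
Qed.
Lemma m8_tens21 P v : m8 (tens21g ad1 mu1 k1 rf1 P v) = tens21g ad2 mu2 k2 rf2 (m4 P) (m2 v).
Proof. by rewrite /tens21g !m8_add3 !m8_tens12 !m4_tens !m2_lmul1 !m2_om. Qed.
Lemma m4_om2 b c : m4 (om2g ad1 mu1 k1 rf1 b c) = om2g ad2 mu2 k2 rf2 b c.
Proof. by rewrite /om2g m4_tens !m2_om. Qed.
Lemma m8_sigma_id (s1 : V4 T1 -> V4 T1) (s2 : V4 T2 -> V4 T2) X :
  (forall P, m4 (s1 P) = s2 (m4 P)) ->
  m8 (sigma_idg ad1 mu1 k1 rf1 s1 X) = sigma_idg ad2 mu2 k2 rf2 s2 (m8 X).
Proof.
move=> Hs; rewrite /sigma_idg.
apply: m8_add3E; apply: m8_add3E; apply: m8_add3E.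
all: by rewrite m8_tens21 Hs m4_lmul2 m4_om2 !m2_om.
Qed.
Lemma m4_nab N0 N1 w : m4 (nabg ad1 mu1 k1 rf1 df1 N0 N1 w) = nabg ad2 mu2 k2 rf2 df2 (m4 N0) (m4 N1) (m2 w).
Proof. by rewrite /nabg !m4_add2 !m4_lmul2 !m4_tens !m2_d !m2_om. Qed.
Lemma m4_sig S P : m4 (sigg ad1 mu1 S P) = sigg ad2 mu2 (m44 S) (m4 P).
Proof. by rewrite /sigg !m4_add2 !m4_lmul2. Qed.
Lemma m44_Sof N0 N1 : m44 (Sofg ad1 mu1 k1 rf1 df1 N0 N1) = Sofg ad2 mu2 k2 rf2 df2 (m4 N0) (m4 N1).
Proof.
rewrite /m44 /Sofg; congr mkV4; apply: m4_add2E.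
all: by rewrite ?m4_nab ?m4_rmul2 ?m2_rmul1 ?m2_om ?Hk.
Qed.
Lemma m8_metg g N0 N1 : m8 (metg ad1 mu1 k1 rf1 df1 g N0 N1) = metg ad2 mu2 k2 rf2 df2 (m4 g) (m4 N0) (m4 N1).
Proof.
rewrite /metg.
apply: m8_add3E; apply: m8_add3E.
all: rewrite /metterm; apply: m8_add3E.
all: first [ by rewrite m8_tens21 !m4_nab !m2_lmul1 !m2_om
           | rewrite (@m8_sigma_id _ (sigg ad2 mu2 (Sofg ad2 mu2 k2 rf2 df2 (m4 N0) (m4 N1))));
             [ by rewrite !m8_tens12 !m4_nab !m2_lmul1 !m2_om
             | by move=> P; rewrite m4_sig m44_Sof ] ].
Qed.
End Morph.

Definition eqV4 (T : eqType) (P Q : V4 T) :=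
  [&& v00 P == v00 Q, v01 P == v01 Q, v10 P == v10 Q & v11 P == v11 Q].
Lemma eqV4P (T : eqType) : Equality.axiom (@eqV4 T).
Proof.
move=> [a b c e] [a' b' c' e']; rewrite /eqV4 /=.
apply: (iffP idP) => [/and4P [/eqP -> /eqP -> /eqP -> /eqP ->] // | [-> -> -> ->]].
by rewrite !eqxx.
Qed.
HB.instance Definition _ (T : eqType) := hasDecEq.Build (V4 T) (@eqV4P T).

Definition allA : seq A := [:: mkA false false false; mkA true false false;
  mkA false true false; mkA true true false; mkA false false true;
  mkA true false true; mkA false true true; mkA true true true].
Lemma allA_spec a : a \in allA.
Proof. by case: a => [[[] []] []]. Qed.
Definition allA2 : seq (A * A) := allpairs pair allA allA.
Lemma allA2_spec w : w \in allA2.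
Proof. by case: w => a b; apply: allpairs_f; apply: allA_spec. Qed.
Definition allV4 : seq (V4 A) :=
  allpairs (fun ab ce : A * A => mkV4 ab.1 ab.2 ce.1 ce.2) allA2 allA2.
Lemma allV4_spec P : P \in allV4.
Proof.
case: P => a b c e.
exact: (@allpairs_f _ _ _ (fun ab ce : A * A => mkV4 ab.1 ab.2 ce.1 ce.2) allA2 allA2 (a, b) (c, e) (allA2_spec _) (allA2_spec _)).
Qed.
Definition kerW : seq (V4 A) := filter (fun T => wedgec T == zeroA) allV4.
Lemma kerW_spec P : wedgec P = zeroA -> P \in kerW.
Proof. by move=> H; rewrite mem_filter H eqxx allV4_spec. Qed.

Definition n3sym (a b c : pA) : pA :=
  pmulA (pconst xA) (paddA (pmulA (pconst yA) a) (paddA b c)).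
Definition Nsym0 : V4 pA := mkV4 (pvar 0) (pvar 1) (pvar 2) (n3sym (pvar 0) (pvar 1) (pvar 2)).
Definition Nsym1 : V4 pA := mkV4 (pvar 3) (pvar 4) (pvar 5) (n3sym (pvar 3) (pvar 4) (pvar 5)).
Definition g0sym : V4 pA := mkV4 (pconst xA) (pconst oneA) (pconst oneA) (pconst (addF8 oneA yA)).
Definition rfsym := rfrob paddA pmulA pconst.
Definition dfsym := dfrob paddA pmulA pconst.
Definition msym (beta : A) : V8 pA :=
  metg paddA pmulA pconst rfsym dfsym (lmul2g pmulA (pconst beta) g0sym) Nsym0 Nsym1.
Lemma rfrob_tab a : rfrob addF8 mulF8 ida a = rtab a.
Proof. by case: a => [[[] []] []]. Qed.
Lemma dfrob_tab a : dfrob addF8 mulF8 ida a = dtab a.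
Proof. by case: a => [[[] []] []]. Qed.
Lemma iA_rf e a : m4 (iA e) (rfsym a) = rtab (iA e a).
Proof. by rewrite /rfsym (m4_rfrob (iA_add e) (iA_mul e) (iA_const e)) rfrob_tab. Qed.
Lemma iA_df e a : m2 (iA e) (dfsym a) = dtab (iA e a).
Proof. by rewrite /dfsym (m2_dfrob (iA_add e) (iA_mul e) (iA_const e)) dfrob_tab. Qed.

Definition Abits (a : A) : seq bool := [:: a.1.1; a.1.2; a.2].
Definition bits3 (N : V4 A) : seq bool := Abits (v00 N) ++ Abits (v01 N) ++ Abits (v10 N).
Definition bitsOf (N0 N1 : V4 A) : seq bool := bits3 N0 ++ bits3 N1.
Definition envOf N0 N1 (i : nat) := nth false (bitsOf N0 N1) i.

Lemma msym_eval e beta :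
  m8 (iA e) (msym beta) = metc (lmul2c beta g0c) (m4 (iA e) Nsym0) (m4 (iA e) Nsym1).
Proof.
rewrite /msym (m8_metg (iA_add e) (iA_mul e) (iA_const e) (iA_rf e) (iA_df e)).
rewrite (m4_lmul2 (iA_mul e)) iA_const.
have -> : m4 (iA e) g0sym = g0c by rewrite /m4 /g0sym /= !iA_const.
by [].
Qed.

Lemma n3_torsion a b c e : wedgec (mkV4 a b c e) = zeroA ->
  e = mulF8 xA (addF8 (mulF8 yA a) (addF8 b c)).
Proof.
move=> H.
have E : forall x, x = mulF8 xA (mulF8 (addF8 oneA yA) x).
  by move=> [[[] []] []].
rewrite [LHS]E; congr (mulF8 xA _); move: H; rewrite /wedgeg /=.
move: a b c e => [[[] []] []] [[[] []] []] [[[] []] []] [[[] []] []]; by [].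
Qed.

Lemma iA_pvar e i : iA e (pvar i) = (e (3 * i), e (3 * i + 1), e (3 * i + 2)).
Proof. by rewrite /iA /pvar /pev /mev /= !andbT !addbF. Qed.

Lemma Nsym0_eval N0 N1 : wedgec N0 = zeroA -> m4 (iA (envOf N0 N1)) Nsym0 = N0.
Proof.
case: N0 => a b c e /n3_torsion ->.
rewrite /m4 /Nsym0 /n3sym /= !(iA_mul, iA_add, iA_const, iA_pvar).
by case: a => [[? ?] ?]; case: b => [[? ?] ?]; case: c => [[? ?] ?].
Qed.
Lemma Nsym1_eval N0 N1 : wedgec N1 = zeroA -> m4 (iA (envOf N0 N1)) Nsym1 = N1.
Proof.
case: N1 => a b c e /n3_torsion ->.
rewrite /m4 /Nsym1 /n3sym /= !(iA_mul, iA_add, iA_const, iA_pvar).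
by case: a => [[? ?] ?]; case: b => [[? ?] ?]; case: c => [[? ?] ?].
Qed.

Fixpoint allz (e : nat -> bool) (s : seq spoly) : bool :=
  match s with [::] => true | p :: s' => if pev e p then false else allz e s' end.
Lemma allzP e s : (forall p, p \in s -> pev e p = false) -> allz e s.
Proof.
elim: s => //= p s IH H; rewrite H ?mem_head //; apply: IH => q Hq.
by apply: H; rewrite inE Hq orbT.
Qed.
Definition outs (M : V8 pA) : seq spoly :=
  [:: (e000 M).1.1; (e000 M).1.2; (e000 M).2; (e001 M).1.1; (e001 M).1.2; (e001 M).2;
      (e010 M).1.1; (e010 M).1.2; (e010 M).2; (e011 M).1.1; (e011 M).1.2; (e011 M).2;
      (e100 M).1.1; (e100 M).1.2; (e100 M).2; (e101 M).1.1; (e101 M).1.2; (e101 M).2;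
      (e110 M).1.1; (e110 M).1.2; (e110 M).2; (e111 M).1.1; (e111 M).1.2; (e111 M).2].
Definition mkL (O : seq spoly) (cs : seq (seq nat)) : seq spoly :=
  map (fun c => foldr padd [::] (map (fun i => nth [::] O i) c)) cs.
Definition split9 (p : spoly) : spoly * spoly :=
  (filter (fun m => all (fun i => i < 9) m) p, filter (predC (fun m => all (fun i => i < 9) m)) p).
Definition hi9 (p : spoly) : bool := all (fun m => all (fun i => 9 <= i) m) p.
Definition mkLsp (L : seq spoly) : seq (spoly * spoly) :=
  [seq split9 p | p <- L & hi9 (split9 p).2].
Definition env0 (N0 : V4 A) (i : nat) := nth false (bits3 N0) i.
Definition env1 (N1 : V4 A) (i : nat) := nth false (bits3 N1) (i - 9).
Definition mkVK (K : seq (V4 A)) (Lsp : seq (spoly * spoly)) : seq (V4 A * seq bool) :=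
  [seq (N1, [seq pev (env1 N1) q.2 | q <- Lsp]) | N1 <- K].
Definition solrow (O : seq spoly) (VK : seq (V4 A * seq bool)) (N0 : V4 A) (U : seq bool) :=
  [seq (N0, NV.1) | NV <- VK & if U == NV.2 then allz (envOf N0 NV.1) O else false].
Definition solsc_aux (K : seq (V4 A)) (O : seq spoly) (Lsp : seq (spoly * spoly))
   (VK : seq (V4 A * seq bool)) :=
  flatten [seq solrow O VK N0 [seq pev (env0 N0) q.1 | q <- Lsp] | N0 <- K].
Definition solsc_aux2 (K : seq (V4 A)) (O : seq spoly) (Lsp : seq (spoly * spoly)) :=
  solsc_aux K O Lsp (mkVK K Lsp).
Definition solsc_aux3 (K : seq (V4 A)) (O : seq spoly) (cs : seq (seq nat)) :=
  solsc_aux2 K O (mkLsp (mkL O cs)).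
Definition combos (beta : A) : seq (seq nat) :=
  if beta == xA then
[:: [:: 1; 2; 3; 5; 9; 10; 15; 16]; [:: 0; 2; 3; 5; 6; 7; 9; 11; 12; 13; 15; 17]; [:: 0; 1; 2; 4; 5; 18]; [:: 1; 2; 4; 5; 7; 13; 19]; [:: 0; 1; 4; 5; 6; 12; 20]; [:: 0; 1; 3; 4; 5; 6; 7; 12; 13; 21]; [:: 0; 2; 3; 4; 6; 7; 9; 12; 13; 15; 22]; [:: 0; 1; 3; 4; 6; 7; 9; 12; 13; 15; 23]]
  else if beta == addF8 oneA xA then
[:: [:: 5; 8; 14]; [:: 0; 1; 3; 4; 5; 6; 7; 9; 10; 12; 13; 15; 16]; [:: 0; 1; 2; 5; 6; 7; 11; 12; 13; 17]; [:: 0; 1; 2; 5; 7; 13; 18]; [:: 1; 2; 5; 19]; [:: 0; 1; 5; 6; 7; 12; 13; 20]; [:: 2; 5; 9; 15; 21]; [:: 0; 1; 2; 4; 6; 7; 12; 13; 22]; [:: 2; 23]]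
  else if beta == addF8 oneA yA then
[:: [:: 4; 7; 13]; [:: 2; 8; 10; 14; 16]; [:: 1; 4; 5; 11; 17]; [:: 0; 1; 2; 4; 8; 14; 18]; [:: 1; 2; 8; 14; 19]; [:: 0; 1; 4; 6; 8; 12; 14; 20]; [:: 1; 2; 3; 8; 14; 21]; [:: 1; 22]; [:: 1; 2; 3; 5; 8; 9; 14; 15; 23]]
  else
[:: [:: 3; 4; 5; 6; 7; 8; 12; 13; 14]; [:: 1; 3; 5; 7; 10; 13; 16]; [:: 0; 1; 2; 4; 9; 11; 15; 17]; [:: 0; 1; 2; 3; 4; 5; 6; 12; 18]; [:: 1; 2; 3; 4; 5; 6; 7; 12; 13; 19]; [:: 0; 1; 3; 4; 5; 20]; [:: 0; 2; 7; 9; 13; 15; 21]; [:: 0; 1; 2; 5; 9; 15; 22]; [:: 0; 2; 5; 7; 13; 23]].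
Definition solsc (beta : A) : seq (V4 A * V4 A) :=
  solsc_aux3 kerW (outs (msym beta)) (combos beta).

Lemma pev_eq_in e e' (p : spoly) : (forall m, m \in p -> forall i, i \in m -> e i = e' i) ->
  pev e p = pev e' p.
Proof.
elim: p => //= m p IH H; rewrite IH; last by move=> m' Hm'; apply: H; rewrite inE Hm' orbT.
congr (_ (+) _); rewrite /mev; apply: eq_in_all => i Hi; exact: (H m (mem_head _ _) i Hi).
Qed.
Lemma size_bits3 N : size (bits3 N) = 9.
Proof. by []. Qed.
Lemma pev_split N0 N1 p : hi9 (split9 p).2 ->
  pev (envOf N0 N1) p = pev (env0 N0) (split9 p).1 (+) pev (env1 N1) (split9 p).2.
Proof.
move=> Hh.
have Hp : perm_eq (filter (fun m => all (fun i => i < 9) m) p ++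
    filter (predC (fun m => all (fun i => i < 9) m)) p) p by rewrite perm_filterC.
rewrite -(pev_perm _ Hp) pev_cat.
congr (_ (+) _); apply: pev_eq_in => m.
- rewrite mem_filter => /andP [/allP Hm _] i /Hm Hi.
  by rewrite /envOf /env0 /bitsOf nth_cat size_bits3 Hi.
- move/allP: Hh => /[apply] /allP Hm i /Hm Hi.
  by rewrite /envOf /env1 /bitsOf nth_cat size_bits3 ltnNge Hi.
Qed.

Lemma pev_mkL e O c : (forall p, p \in O -> pev e p = false) ->
  pev e (foldr padd [::] (map (fun i => nth [::] O i) c)) = false.
Proof.
move=> H; elim: c => //= i c IH; rewrite pev_padd IH addbF.
case: (ltnP i (size O)) => Hi; first by apply: H; rewrite mem_nth.
by rewrite nth_default.
Qed.

Lemma solsc_mem beta N0 N1 : wedgec N0 = zeroA -> wedgec N1 = zeroA ->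
  metc (lmul2c beta g0c) N0 N1 = mkV8 zeroA zeroA zeroA zeroA zeroA zeroA zeroA zeroA ->
  (N0, N1) \in solsc beta.
Proof.
move=> H0 H1 HM.
pose e := envOf N0 N1.
have HM' : m8 (iA e) (msym beta) = mkV8 zeroA zeroA zeroA zeroA zeroA zeroA zeroA zeroA.
  by rewrite msym_eval /e Nsym0_eval // Nsym1_eval.
have HO : forall p, p \in outs (msym beta) -> pev e p = false.
  move: HM'; rewrite /m8 /outs; case: (msym beta) => x0 x1 x2 x3 x4 x5 x6 x7 /=.
  rewrite /iA /zeroA /mkA.
  case=> E00 E01 E02 E10 E11 E12 E20 E21 E22 E30 E31 E32 E40 E41 E42 E50 E51 E52 E60 E61 E62 E70 E71 E72.
  move=> p; rewrite !inE.
  by do 23! (case/orP => [/eqP -> // | ]); move/eqP => ->.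
have HL : forall p, p \in mkL (outs (msym beta)) (combos beta) -> pev e p = false.
  move=> p /mapP [c _ ->]; exact: pev_mkL.
rewrite /solsc /solsc_aux3 /solsc_aux2 /solsc_aux.
set O := outs (msym beta).
set Lsp := mkLsp (mkL O (combos beta)).
apply/flattenP; exists (solrow O (mkVK kerW Lsp) N0 [seq pev (env0 N0) q.1 | q <- Lsp]).
  by apply: (map_f (fun N0 => solrow O (mkVK kerW Lsp) N0 [seq pev (env0 N0) q.1 | q <- Lsp])); apply: kerW_spec.
rewrite /solrow.
have -> : N1 = (N1, [seq pev (env1 N1) q.2 | q <- Lsp]).1 by [].
apply: (map_f (fun NV : V4 A * seq bool => (N0, NV.1))).
rewrite mem_filter; apply/andP; split; last first.
  by rewrite /mkVK; apply: (map_f (fun N1 => (N1, [seq pev (env1 N1) q.2 | q <- Lsp]))); apply: kerW_spec.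
have -> : [seq pev (env0 N0) q.1 | q <- Lsp] = [seq pev (env1 N1) q.2 | q <- Lsp].
  apply/eq_in_map => q; rewrite /Lsp /mkLsp => /mapP [p]; rewrite mem_filter => /andP [Hh Hp] ->.
  have := HL p Hp; rewrite /e (pev_split _ _ Hh).
  by case: (pev (env0 N0) _); case: (pev (env1 N1) _).
by rewrite eqxx; apply: allzP.
Qed.

Lemma lin4_add p0 p1 p2 p3 q0 q1 q2 q3 s0 s1 s2 s3 :
  addF8 (addF8 (mulF8 (addF8 p0 q0) s0) (mulF8 (addF8 p1 q1) s1))
        (addF8 (mulF8 (addF8 p2 q2) s2) (mulF8 (addF8 p3 q3) s3)) =
  addF8 (addF8 (addF8 (mulF8 p0 s0) (mulF8 p1 s1)) (addF8 (mulF8 p2 s2) (mulF8 p3 s3)))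
        (addF8 (addF8 (mulF8 q0 s0) (mulF8 q1 s1)) (addF8 (mulF8 q2 s2) (mulF8 q3 s3))).
Proof.
by rewrite !mulF8Dl (addF8ACA (mulF8 p0 s0)) (addF8ACA (mulF8 p2 s2)) addF8ACA.
Qed.
Lemma lin4_lmul a p0 p1 p2 p3 s0 s1 s2 s3 :
  addF8 (addF8 (mulF8 (mulF8 a p0) s0) (mulF8 (mulF8 a p1) s1))
        (addF8 (mulF8 (mulF8 a p2) s2) (mulF8 (mulF8 a p3) s3)) =
  mulF8 a (addF8 (addF8 (mulF8 p0 s0) (mulF8 p1 s1)) (addF8 (mulF8 p2 s2) (mulF8 p3 s3))).
Proof. by rewrite -!mulF8A -!mulF8Dr. Qed.

Definition map4 (T1 T2 : Type) (f : T1 -> T2) (R : V4 T1) : V4 T2 :=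
  mkV4 (f (v00 R)) (f (v01 R)) (f (v10 R)) (f (v11 R)).
Definition ipc (G P : V4 A) : A :=
  addF8 (addF8 (mulF8 (v00 P) (v00 G)) (mulF8 (v01 P) (v01 G)))
        (addF8 (mulF8 (v10 P) (v10 G)) (mulF8 (v11 P) (v11 G))).

Lemma sigc_add S P Q : sigc S (add2c P Q) = add2c (sigc S P) (sigc S Q).
Proof. by rewrite /sigg /add2g /lmul2g /=; congr mkV4; apply: lin4_add. Qed.
Lemma sigc_lmul S a P : sigc S (lmul2c a P) = lmul2c a (sigc S P).
Proof. by rewrite /sigg /add2g /lmul2g /=; congr mkV4; apply: lin4_lmul. Qed.
Lemma ipc_add G P Q : ipc G (add2c P Q) = addF8 (ipc G P) (ipc G Q).
Proof. by rewrite /ipc /add2g /=; apply: lin4_add. Qed.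
Lemma ipc_lmul G a P : ipc G (lmul2c a P) = mulF8 a (ipc G P).
Proof. by rewrite /ipc /lmul2g /=; apply: lin4_lmul. Qed.

Lemma lin_sigc (f : V4 A -> V4 A) R P :
  (forall X Y, f (add2c X Y) = add2c (f X) (f Y)) ->
  (forall a X, f (lmul2c a X) = lmul2c a (f X)) ->
  f (sigc R P) = sigc (map4 f R) P.
Proof. by move=> Ha Hl; rewrite /sigg !Ha !Hl. Qed.
Lemma lin_ipc (f : V4 A -> A) R P :
  (forall X Y, f (add2c X Y) = addF8 (f X) (f Y)) ->
  (forall a X, f (lmul2c a X) = mulF8 a (f X)) ->
  f (sigc R P) = ipc (map4 f R) P.
Proof. by move=> Ha Hl; rewrite /sigg !Ha !Hl. Qed.
Lemma ipc_mulr G P a : mulF8 (ipc G P) a = ipc (map4 (fun g => mulF8 g a) G) P.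
Proof. by rewrite /ipc /map4 /= !mulF8A -!mulF8Dl. Qed.

Lemma tens_lmul t w v : tensc (lmul1c t w) v = lmul2c t (tensc w v).
Proof.
case: w => w0 w1; rewrite /tensg /rmul1g /lmul1g /lmul2g /=.
by rewrite -!mulF8A -!mulF8Dr.
Qed.
Definition Rb (a : A) : V4 (V4 A) :=
  mkV4 (tensc (omc false) (rmul1c (omc false) a)) (tensc (omc false) (rmul1c (omc true) a))
       (tensc (omc true) (rmul1c (omc false) a)) (tensc (omc true) (rmul1c (omc true) a)).
Lemma rmul2c_dec P a : rmul2c P a = sigc (Rb a) P.
Proof. by rewrite /rmul2g !tens_lmul. Qed.

Definition tupV8 (T : Type) (P : V8 T) :=
  (e000 P, e001 P, e010 P, e011 P, e100 P, e101 P, e110 P, e111 P).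
Definition eqV8 (T : eqType) (P Q : V8 T) := tupV8 P == tupV8 Q.
Lemma eqV8P (T : eqType) : Equality.axiom (@eqV8 T).
Proof.
move=> [a b c e f g h i] [a' b' c' e' f' g' h' i']; rewrite /eqV8 /tupV8 /=.
by apply: (iffP eqP) => [[-> -> -> -> -> -> -> ->] | [-> -> -> -> -> -> -> ->]].
Qed.
HB.instance Definition _ (T : eqType) := hasDecEq.Build (V8 T) (@eqV8P T).

Definition nablaF (N0 N1 : V4 A) : {ffun Om1 -> Om2} := [ffun w => mk2 (nabc N0 N1 (c1 w))].
Definition sigmaF (S : V4 (V4 A)) : {ffun Om2 -> Om2} := [ffun T => mk2 (sigc S (c2 T))].
Lemma c2_nablaF N0 N1 w : c2 (nablaF N0 N1 w) = nabc N0 N1 (c1 w).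
Proof. by rewrite ffunE c2_mk2. Qed.
Lemma c2_sigmaF S T : c2 (sigmaF S T) = sigc S (c2 T).
Proof. by rewrite ffunE c2_mk2. Qed.

Lemma metric_conv (g : Om2) (nabla : {ffun Om1 -> Om2}) (sigma : {ffun Om2 -> Om2}) N0 N1 :
  (forall w, c2 (nabla w) = nabc N0 N1 (c1 w)) ->
  (forall T, c2 (sigma T) = sigc (Sofc N0 N1) (c2 T)) ->
  c3 (\big[add3/zero3]_(kj : 'I_2 * 'I_2)
         add3 (tens21 (nabla (lmul1 (g kj) (om kj.1))) (om kj.2))
              (sigma_id sigma (tens12 (lmul1 (g kj) (om kj.1)) (nabla (om kj.2)))))
  = metc (c2 g) N0 N1.
Proof.
move=> Hn Hs.
rewrite (@c3_big22 _ (fun p => metterm addF8 mulF8 ida rtab dtab N0 N1 (Sofc N0 N1) (gco (c2 g) p) (bo p.1) (bo p.2))).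
  by [].
move=> p.
have -> : g p = gco (c2 g) p.
  by case: p => i j; case: (I2P i) => ->; case: (I2P j) => ->.
rewrite c3_add3 c3_tens21 Hn c1_lmul1 !c1_om.
rewrite (@c3_sigma_id _ (sigc (Sofc N0 N1)) _ Hs) c3_tens12 c1_lmul1 c1_om Hn c1_om.
by [].
Qed.

Lemma lmul2c_addl a b N : lmul2c (addF8 a b) N = add2c (lmul2c a N) (lmul2c b N).
Proof. by rewrite /lmul2g /add2g /=; congr mkV4; apply: mulF8Dl. Qed.
Lemma add2cACA P Q R S : add2c (add2c P Q) (add2c R S) = add2c (add2c P R) (add2c Q S).
Proof. by rewrite /add2g /=; congr mkV4; apply: addF8ACA. Qed.
Lemma Dadd_all : all (fun b => all (fun a => all (fun a' =>
   tensc (dc (addF8 a a')) (omc b) == add2c (tensc (dc a) (omc b)) (tensc (dc a') (omc b))) allA) allA) [:: false; true].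
Proof. by vm_compute. Qed.
Lemma Dadd b a a' : tensc (dc (addF8 a a')) (omc b) = add2c (tensc (dc a) (omc b)) (tensc (dc a') (omc b)).
Proof.
apply/eqP; move/allP: Dadd_all => /(_ b); rewrite inE; case: b => /(_ isT) /allP /(_ a (allA_spec _)) /allP; apply; exact: allA_spec.
Qed.
Lemma nabc_add N0 N1 w v : nabc N0 N1 (add1c w v) = add2c (nabc N0 N1 w) (nabc N0 N1 v).
Proof.
have E1 : (add1c w v).1 = addF8 w.1 v.1 by [].
have E2 : (add1c w v).2 = addF8 w.2 v.2 by [].
rewrite /nabg E1 E2 !lmul2c_addl !Dadd.
by rewrite (add2cACA (lmul2c w.1 N0)) (add2cACA (lmul2c w.2 N1)) add2cACA.
Qed.

Definition qlc_ok (beta : A) (N0 N1 : V4 A) : bool :=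
  let S := Sofc N0 N1 in
  [&& all (fun a => all (fun w => nabc N0 N1 (lmul1c a w) == add2c (lmul2c a (nabc N0 N1 w)) (tensc (dc a) w)) allA2) allA,
      all (fun a => all (fun w => nabc N0 N1 (rmul1c w a) == add2c (rmul2c (nabc N0 N1 w) a) (sigc S (tensc w (dc a)))) allA2) allA,
      all (fun a => map4 (sigc S) (Rb a) == map4 (sigc (Rb a)) S) allA,
      all (fun w => wedgec (nabc N0 N1 w) == d1c w) allA2 & metc (lmul2c beta g0c) N0 N1 == zero8 ].

Lemma QLC_of_ok beta N0 N1 : qlc_ok beta N0 N1 ->
  is_QLC (gmetric beta) (nablaF N0 N1) (sigmaF (Sofc N0 N1)).
Proof.
case/and5P => /allP Hll /allP Hrl /allP Hsr /allP Htor /eqP Hmet.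
apply/and5P; split.
- apply/forallP => w; apply/forallP => v; apply/eqP; apply: c2_inj.
  by rewrite c2_add2 !c2_nablaF c1_add1 nabc_add.
- apply/forallP => a; apply/forallP => w; apply/eqP; apply: c2_inj.
  rewrite c2_add2 c2_lmul2 c2_tens !c2_nablaF c1_lmul1 c1_d.
  by apply/eqP; move/allP: (Hll _ (allA_spec a)); apply; apply: allA2_spec.
- apply/forallP => a; apply/forallP => w; apply/eqP; apply: c2_inj.
  rewrite c2_add2 c2_rmul2 c2_sigmaF c2_tens !c2_nablaF c1_rmul1 c1_d.
  by apply/eqP; move/allP: (Hrl _ (allA_spec a)); apply; apply: allA2_spec.
- apply/and3P; split.
  + apply/forallP => T; apply/forallP => U; apply/eqP; apply: c2_inj.
    by rewrite c2_add2 !c2_sigmaF c2_add2 sigc_add.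
  + apply/forallP => a; apply/forallP => T; apply/eqP; apply: c2_inj.
    by rewrite c2_lmul2 !c2_sigmaF c2_lmul2 sigc_lmul.
  + apply/forallP => a; apply/forallP => T; apply/eqP; apply: c2_inj.
    rewrite c2_rmul2 !c2_sigmaF c2_rmul2 !rmul2c_dec.
    rewrite (@lin_sigc (sigc (Sofc N0 N1)) (Rb a) (c2 T)); last 2 first.
    * exact: sigc_add.
    * exact: sigc_lmul.
    rewrite (@lin_sigc (sigc (Rb a)) (Sofc N0 N1) (c2 T)); last 2 first.
    * exact: sigc_add.
    * exact: sigc_lmul.
    by rewrite (eqP (Hsr _ (allA_spec a))).
- apply/andP; split.
  + apply/forallP => w; apply/eqP.
    by rewrite wedge_c c2_nablaF d1_c; apply/eqP/Htor/allA2_spec.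
  + apply/eqP; apply: c3_inj; rewrite c3_zero3.
    rewrite (@metric_conv _ _ _ N0 N1) ?c2_gmetric //.
    * exact: c2_nablaF.
    * exact: c2_sigmaF.
Qed.

Definition gsel (P : V4 A) (k j : bool) : A :=
  if k then (if j then v11 P else v10 P) else (if j then v01 P else v00 P).
Lemma g_gsel (g : Om2) (p : 'I_2 * 'I_2) : g p = gsel (c2 g) (bo p.1) (bo p.2).
Proof. by case: p => i j; case: (I2P i) => ->; case: (I2P j) => ->. Qed.

Definition inv1t (g G : V4 A) (eta : A * A) (k j : bool) : A * A :=
  lmul1c (ipc G (tensc eta (lmul1c (gsel g k j) (omc k)))) (omc j).
Definition inv1c (g G : V4 A) (eta : A * A) : A * A :=
  add1c (add1c (inv1t g G eta false false) (inv1t g G eta false true))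
        (add1c (inv1t g G eta true false) (inv1t g G eta true true)).
Definition inv2t (g G : V4 A) (eta : A * A) (k j : bool) : A * A :=
  rmul1c (lmul1c (gsel g k j) (omc k)) (ipc G (tensc (omc j) eta)).
Definition inv2c (g G : V4 A) (eta : A * A) : A * A :=
  add1c (add1c (inv2t g G eta false false) (inv2t g G eta false true))
        (add1c (inv2t g G eta true false) (inv2t g G eta true true)).

Section IPConv.
Variables (g : Om2) (ip : {ffun Om2 -> A}) (G : V4 A).
Hypothesis Hip : forall T, ip T = ipc G (c2 T).
Lemma inv1_conv eta :
  c1 (\big[add1/zero1]_(kj : 'I_2 * 'I_2)
        lmul1 (ip (tens eta (lmul1 (g kj) (om kj.1)))) (om kj.2)) = inv1c (c2 g) G (c1 eta).
Proof.
rewrite (@c1_big22 _ (fun p => inv1t (c2 g) G (c1 eta) (bo p.1) (bo p.2))) //.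
by move=> p; rewrite c1_lmul1 Hip c2_tens c1_lmul1 !c1_om g_gsel.
Qed.
Lemma inv2_conv eta :
  c1 (\big[add1/zero1]_(kj : 'I_2 * 'I_2)
        rmul1 (lmul1 (g kj) (om kj.1)) (ip (tens (om kj.2) eta))) = inv2c (c2 g) G (c1 eta).
Proof.
rewrite (@c1_big22 _ (fun p => inv2t (c2 g) G (c1 eta) (bo p.1) (bo p.2))) //.
by move=> p; rewrite c1_rmul1 Hip c2_tens c1_lmul1 !c1_om g_gsel.
Qed.
End IPConv.

Definition ipF (G : V4 A) : {ffun Om2 -> A} := [ffun T => ipc G (c2 T)].

Definition ip_ok (g G : V4 A) : bool :=
  all (fun eta => (inv1c g G eta == eta) && (inv2c g G eta == eta)) allA2 &&
  all (fun a => map4 (ipc G) (Rb a) == map4 (fun x => mulF8 x a) G) allA.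

Lemma IP_of_ok g G : ip_ok (c2 g) G -> is_inv_metric g (ipF G).
Proof.
case/andP => /allP Hinv /allP Hr.
have Hip : forall T, ipF G T = ipc G (c2 T) by move=> T; rewrite ffunE.
apply/and5P; split.
- apply/forallP => T; apply/forallP => U; apply/eqP.
  by rewrite !Hip c2_add2 ipc_add.
- apply/forallP => a; apply/forallP => T; apply/eqP.
  by rewrite !Hip c2_lmul2 ipc_lmul.
- apply/forallP => a; apply/forallP => T; apply/eqP.
  rewrite !Hip c2_rmul2 rmul2c_dec ipc_mulr.
  rewrite (@lin_ipc (ipc G) (Rb a) (c2 T)); last 2 first.
  + exact: ipc_add.
  + exact: ipc_lmul.
  by rewrite (eqP (Hr _ (allA_spec a))).
- apply/forallP => eta; apply/eqP; apply: c1_inj.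
  rewrite (inv1_conv _ Hip).
  by case/andP: (Hinv _ (allA2_spec (c1 eta))) => /eqP.
- apply/forallP => eta; apply/eqP; apply: c1_inj.
  rewrite (inv2_conv _ Hip).
  by case/andP: (Hinv _ (allA2_spec (c1 eta))) => _ /eqP.
Qed.

Definition Gbasis (ip : {ffun Om2 -> A}) : V4 A :=
  mkV4 (ip (om2 o0 o0)) (ip (om2 o0 o1)) (ip (om2 o1 o0)) (ip (om2 o1 o1)).
Lemma ip_form g ip : is_inv_metric g ip -> forall T, ip T = ipc (Gbasis ip) (c2 T).
Proof.
case/and5P => /forallP Ha /forallP Hl _ _ _ T.
rewrite {1}(T_decomp T) !(eqP (forallP (Ha _) _)) !(eqP (forallP (Hl _) _)).
by [].
Qed.
Definition inv_basis_ok (g G : V4 A) : bool :=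
  [&& inv1c g G (omc false) == omc false, inv1c g G (omc true) == omc true,
      inv2c g G (omc false) == omc false & inv2c g G (omc true) == omc true].
Lemma ip_basis_ok g ip : is_inv_metric g ip -> inv_basis_ok (c2 g) (Gbasis ip).
Proof.
move=> H; have Hf := ip_form H.
case/and5P: H => _ _ _ /forallP H1 /forallP H2.
have E1 := inv1_conv g Hf (om o0); rewrite (eqP (H1 _)) c1_om in E1.
have E2 := inv1_conv g Hf (om o1); rewrite (eqP (H1 _)) c1_om in E2.
have E3 := inv2_conv g Hf (om o0); rewrite (eqP (H2 _)) c1_om in E3.
have E4 := inv2_conv g Hf (om o1); rewrite (eqP (H2 _)) c1_om in E4.
change (bo o0) with false in E1; change (bo o0) with false in E3.
change (bo o1) with true in E2; change (bo o1) with true in E4.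
by rewrite /inv_basis_ok -E1 -E2 -E3 -E4 !eqxx.
Qed.

Definition lapc (G : V4 A) (s : V4 A * V4 A) : A * A := (ipc G s.2, ipc G s.1).
Definition Gsol (g : V4 A) : V4 A :=
  head (mkV4 zeroA zeroA zeroA zeroA) [seq G <- allV4 | inv_basis_ok g G].
Definition check_L (beta : A) (G : V4 A) (lapL : seq (A * A)) (n : nat) (L : seq (V4 A * V4 A)) :=
  [&& all (fun s => qlc_ok beta s.1 s.2) L,
      all (fun s => (nabc s.1 s.2 (omc false) == s.1) && (nabc s.1 s.2 (omc true) == s.2)) L,
      uniq L,
      all (fun s => all (fun a => ipc G (nabc s.1 s.2 (dc a)) ==
               addF8 (scalA a.1.2 (lapc G s).1) (scalA a.2 (lapc G s).2)) allA) L,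
      all (fun s => lapc G s \in lapL) L,
      uniq lapL,
      size L == n * size lapL &
      all (fun uv => count (fun s => lapc G s == uv) L == n) lapL].
Definition filtG (g : V4 A) : seq (V4 A) := [seq G' <- allV4 | inv_basis_ok g G'].
Definition zeroV4 : V4 A := mkV4 zeroA zeroA zeroA zeroA.
Definition mc_aux (beta : A) (lapL : seq (A * A)) (n : nat) (F : seq (V4 A)) (G : V4 A) :=
  [&& F == [:: G], ip_ok (lmul2c beta g0c) G & check_L beta G lapL n (solsc beta)].
Definition main_check2 (beta : A) (lapL : seq (A * A)) (n : nat) (G : V4 A) :=
  mc_aux beta lapL n (filtG (lmul2c beta g0c)) G.
Definition mc_auxh (beta : A) (lapL : seq (A * A)) (n : nat) (F : seq (V4 A)) :=
  mc_aux beta lapL n F (head zeroV4 F).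
Definition main_check (beta : A) (lapL : seq (A * A)) (n : nat) :=
  mc_auxh beta lapL n (filtG (lmul2c beta g0c)).

Definition Fm (s : V4 A * V4 A) : {ffun Om1 -> Om2} * {ffun Om2 -> Om2} :=
  (nablaF s.1 s.2, sigmaF (Sofc s.1 s.2)).

Lemma lapl_of_inj u v u' v' : lapl_of u v = lapl_of u' v' -> (u, v) = (u', v').
Proof.
move=> E; have Ey := congr1 (fun f : {ffun A -> A} => f yA) E.
have Ex := congr1 (fun f : {ffun A -> A} => f xA) E.
move: Ey Ex; rewrite /= !ffunE /=.
by rewrite !addF80 !add0F8 => -> ->.
Qed.

Section Main.
Variables (beta : A) (lapL : seq (A * A)) (n : nat) (G : V4 A).
Hypothesis Hc : main_check2 beta lapL n G.
Let g := gmetric beta.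
Let L := solsc beta.

Lemma QLCs_mem p : (p \in QLCs g) = (p \in map Fm L).
Proof.
case/and3P: Hc => _ _ /and5P [/allP Hok _ _ _ _].
rewrite inE; apply/idP/idP.
- case: p => nabla sigma /= H.
  set N0 := c2 (nabla (om o0)); set N1 := c2 (nabla (om o1)).
  have Hm : (N0, N1) \in L.
    case: (QLC_torsion H) => T0 T1.
    apply: solsc_mem => //; rewrite -c2_gmetric; exact: (QLC_metric H).
  have -> : (nabla, sigma) = Fm (N0, N1).
    congr pair.
    + by apply/ffunP => w; apply: c2_inj; rewrite c2_nablaF (QLC_nabla H).
    + by apply/ffunP => T; apply: c2_inj; rewrite c2_sigmaF (QLC_sigma H).
  exact: map_f.
- case/mapP => s Hs ->; exact: QLC_of_ok (Hok _ Hs).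
Qed.

Lemma Fm_inj : {in L &, injective Fm}.
Proof.
case/and3P: Hc => _ _ /and5P [_ /allP Hb _ _ _].
move=> [s0 s1] [t0 t1] /Hb /= /andP [/eqP Hs0 /eqP Hs1] /Hb /= /andP [/eqP Ht0 /eqP Ht1] [E _].
have E0 := congr1 (fun f : {ffun Om1 -> Om2} => c2 (f (om o0))) E.
have E1 := congr1 (fun f : {ffun Om1 -> Om2} => c2 (f (om o1))) E.
move: E0 E1; rewrite /= !c2_nablaF !c1_om /= Hs0 Hs1 Ht0 Ht1.
by move=> -> ->.
Qed.

Lemma lap_Fm (ip : {ffun Om2 -> A}) : (forall T, ip T = ipc G (c2 T)) -> forall s, s \in L ->
  laplacian ip (Fm s).1 = lapl_of (lapc G s).1 (lapc G s).2.
Proof.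
move=> Hip s Hs.
case/and3P: Hc => _ _ /and5P [_ _ _ /allP Hl _].
apply/ffunP => a; rewrite /laplacian /lapl_of [in LHS]ffunE [in RHS]ffunE Hip /= c2_nablaF c1_d.
by apply/eqP; move/allP: (Hl _ Hs); apply; apply: allA_spec.
Qed.

Lemma main_lemma : QLC_laplacians g [seq lapl_of uv.1 uv.2 | uv <- lapL] n.
Proof.
case/and3P: Hc => /eqP Huniq Hip_ok HL.
case/and5P: HL => _ _ HuL _ /and4P [/allP Hin HulapL /eqP Hsize /allP Hcount].
have Hgc : c2 g = lmul2c beta g0c by rewrite c2_gmetric.
split.
  by exists (ipF G); apply: IP_of_ok; rewrite Hgc.
move=> ip Hinv.
have HG : Gbasis ip = G.
  have := ip_basis_ok Hinv; rewrite Hgc => Hb.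
  have : Gbasis ip \in filtG (lmul2c beta g0c) by rewrite mem_filter Hb allV4_spec.
  by rewrite Huniq inE => /eqP.
have Hip : forall T, ip T = ipc G (c2 T) by move=> T; rewrite (ip_form Hinv) HG.
have Hmu : uniq (map Fm L) by rewrite (map_inj_in_uniq Fm_inj).
split.
- rewrite (eq_card QLCs_mem); move/card_uniqP: (Hmu) => ->.
  by rewrite !size_map; exact: Hsize.
- move=> p; rewrite QLCs_mem => /mapP [s Hs ->].
  rewrite (lap_Fm Hip Hs); apply: map_f; exact: Hin.
- move=> L0 /mapP [uv Huv ->].
  have E : [set p in QLCs g | laplacian ip p.1 == lapl_of uv.1 uv.2] =i
           map Fm [seq s <- L | lapc G s == uv].
    move=> p; rewrite inE QLCs_mem; apply/andP/mapP.
    + case=> /mapP [s Hs ->] /eqP Hl; exists s => //.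
      rewrite mem_filter Hs andbT; apply/eqP.
      move: Hl; rewrite (lap_Fm Hip Hs); case: (lapc G s) => u v /lapl_of_inj ->.
      by case: uv {Huv}.
    + case=> s; rewrite mem_filter => /andP [/eqP Hu Hs] ->; split; first exact: map_f.
      by rewrite (lap_Fm Hip Hs) Hu.
  rewrite (eq_card E).
  have/card_uniqP -> : uniq (map Fm [seq s <- L | lapc G s == uv]).
    rewrite (map_inj_in_uniq (f := Fm)); first exact: filter_uniq.
    by move=> x y; rewrite !mem_filter => /andP [_ Hx] /andP [_ Hy]; apply: Fm_inj.
  by rewrite size_map size_filter; apply/eqP; apply: Hcount.
Qed.
End Main.

Lemma mc_1 : main_check xA [:: (zeroA, xA); (zeroA, addF8 oneA (addF8 yA xA)); (xA, oneA)] 4.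
Proof. vm_compute. reflexivity. Qed.
Lemma mc_2 : main_check (addF8 oneA xA) [:: (yA, zeroA); (addF8 oneA (addF8 yA xA), zeroA);
   (addF8 yA xA, addF8 oneA (addF8 yA xA))] 4.
Proof. vm_compute. reflexivity. Qed.
Lemma mc_3 : main_check (addF8 oneA yA) [:: (xA, xA); (yA, yA); (oneA, addF8 oneA yA)] 4.
Proof. vm_compute. reflexivity. Qed.
Lemma mc_4 : main_check yA [:: (zeroA, zeroA)] 4.
Proof. vm_compute. reflexivity. Qed.

Lemma eigen_cases (L : {ffun A -> A}) (S : {set A}) :
  (forall v : A, ((v != zeroA) && (L v == v)) = (v \in S)) -> eigen1 L = S.
Proof. by move=> H; apply/setP => v; rewrite inE H. Qed.

Theorem mainTheorem9 :
  let y2 := xA in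
  let one_y := addF8 oneA yA in
  let one_y2 := addF8 oneA xA in
  let y_y2 := addF8 yA xA in
  let one_y_y2 := addF8 oneA (addF8 yA xA) in
  (* beta = y^2 *)
  [/\ QLC_laplacians (gmetric y2)
        [:: lapl_of zeroA y2; lapl_of zeroA one_y_y2; lapl_of y2 oneA] 4,
  (* beta = 1 + y^2 *)
      QLC_laplacians (gmetric one_y2)
        [:: lapl_of yA zeroA; lapl_of one_y_y2 zeroA; lapl_of y_y2 one_y_y2] 4,
  (* beta = 1 + y *)
      QLC_laplacians (gmetric one_y)
        [:: lapl_of y2 y2; lapl_of yA yA; lapl_of oneA one_y] 4,
  (* beta = y *)
      QLC_laplacians (gmetric yA) [:: lapl_of zeroA zeroA] 4 &
  (* nonzero solutions of Delta v = v, in the order listed *)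
      [/\ [/\ eigen1 (lapl_of zeroA y2) = [set y2],
              eigen1 (lapl_of zeroA one_y_y2) = [set one_y_y2] &
              eigen1 (lapl_of y2 oneA) = set0],
          [/\ eigen1 (lapl_of yA zeroA) = [set yA],
              eigen1 (lapl_of one_y_y2 zeroA) = [set one_y_y2] &
              eigen1 (lapl_of y_y2 one_y_y2) = set0],
          [/\ eigen1 (lapl_of y2 y2) = [set y2],
              eigen1 (lapl_of yA yA) = [set yA] &
              eigen1 (lapl_of oneA one_y) = set0] &
          eigen1 (lapl_of zeroA zeroA) = set0]].
Proof.
move=> y2 one_y one_y2 y_y2 one_y_y2.
split.
- exact: (main_lemma (G := head zeroV4 (filtG (lmul2c xA g0c))) mc_1).
- exact: (main_lemma (G := head zeroV4 (filtG (lmul2c (addF8 oneA xA) g0c))) mc_2).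
- exact: (main_lemma (G := head zeroV4 (filtG (lmul2c (addF8 oneA yA) g0c))) mc_3).
- exact: (main_lemma (G := head zeroV4 (filtG (lmul2c yA g0c))) mc_4).
- rewrite /y2 /one_y /one_y2 /y_y2 /one_y_y2.
  split; [split|split|split|]; apply: eigen_cases => v; rewrite ?inE ffunE;
  by case: v => [[[] []] []].
Qed.
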